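(* Let $\Lambda$ be a normal modal logic of Type A or of Type B, and let $M\subseteq\{\Diamond,\Box\}$. Then it is decidable, given two finite $M$-simple sets $\Phi,\Psi$ of modal formulas, whether $\mathrm{ML}_\Phi\preceq^\Lambda\mathrm{ML}_\Psi$.
   Context: Modal formulas: $\phi::=x\mid\neg\phi\mid\phi\land\psi\mid\phi\lor\psi\mid\Diamond\phi\mid\Box\phi$. A normal modal logic is a set of modal formulas containing all propositional tautologies, the K axiom and $\Diamond\phi\leftrightarrow\neg\Box\neg\phi$, closed under modus ponens, uniform substitution and necessitation; $\Lambda\vdash\phi$ means $\phi\in\Lambda$. $F_\circ$ ($F_\bullet$) is the one-world frame with a reflexive (irreflexive) world. $\Lambda$ is of Type A if $F_\circ\models\Lambda$; of Type B if $F_\bullet\models\Lambda$ and $\Lambda\vdash\Box^n\bot$ for some $n\ge1$. For a set $\Phi$ of modal formulas, $\mathrm{ML}_\Phi$ is the smallest set containing all variables and $\oplus_\phi(\psi_1,\dots,\psi_n)$ whenever $\phi(x_1,\dots,x_n)\in\Phi$ and $\psi_i\in\mathrm{ML}_\Phi$, such a formula standing for the modal formula obtained by recursively substituting $\psi_i$ for $x_i$ in $\phi$. $\mathrm{ML}_\Phi\preceq^\Lambda\mathrm{ML}_\Psi$ means every $\mathrm{ML}_\Phi$-formula is $\Lambda$-equivalent to some $\mathrm{ML}_\Psi$-formula. A set $\Phi$ is $M$-simple if it consists of $\Diamond x$ if and only if $\Diamond\in M$, $\Box x$ if and only if $\Box\in M$, plus any number of purely propositional formulas. *)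

(* Defs.v *)
From Stdlib Require Import List Arith.
Import ListNotations.

Inductive form : Type :=
| Var : nat -> form
| Neg : form -> form
| And : form -> form -> form
| Or  : form -> form -> form
| Dia : form -> form
| Box : form -> form.

Definition Imp (a b : form) : form := Or (Neg a) b.
Definition Iff (a b : form) : form := And (Imp a b) (Imp b a).
(* falsum, as the grammar has no constant *)
Definition Bot : form := And (Var 0) (Neg (Var 0)).

Fixpoint boxn (n : nat) (a : form) : form :=
  match n with 0 => a | S k => Box (boxn k a) end.

Fixpoint subst (s : nat -> form) (a : form) : form :=
  match a with
  | Var n => s n
  | Neg a => Neg (subst s a)
  | And a b => And (subst s a) (subst s b)
  | Or a b => Or (subst s a) (subst s b)
  | Dia a => Dia (subst s a)
  | Box a => Box (subst s a)
  end.

(** propositional evaluation: modal subformulas are treated as atoms *)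
Fixpoint peval (v : nat -> bool) (d b : form -> bool) (a : form) : bool :=
  match a with
  | Var n => v n
  | Neg a => negb (peval v d b a)
  | And a1 a2 => peval v d b a1 && peval v d b a2
  | Or a1 a2 => peval v d b a1 || peval v d b a2
  | Dia a => d a
  | Box a => b a
  end.

(** instances of propositional tautologies *)
Definition tautology (a : form) : Prop :=
  forall v d b, peval v d b a = true.

Definition logic := form -> Prop.

Record normal_logic (L : logic) : Prop := {
  nl_taut : forall a, tautology a -> L a;
  nl_K : L (Imp (Box (Imp (Var 0) (Var 1))) (Imp (Box (Var 0)) (Box (Var 1))));
  nl_dual : L (Iff (Dia (Var 0)) (Neg (Box (Neg (Var 0)))));
  nl_mp : forall a b, L a -> L (Imp a b) -> L b;
  nl_us : forall s a, L a -> L (subst s a);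
  nl_nec : forall a, L a -> L (Box a)
}.

(** one-world frames: reflexive (F_o) and irreflexive (F_bullet) *)
Fixpoint eval_refl (v : nat -> bool) (a : form) : bool :=
  match a with
  | Var n => v n
  | Neg a => negb (eval_refl v a)
  | And a1 a2 => eval_refl v a1 && eval_refl v a2
  | Or a1 a2 => eval_refl v a1 || eval_refl v a2
  | Dia a => eval_refl v a
  | Box a => eval_refl v a
  end.

Fixpoint eval_irr (v : nat -> bool) (a : form) : bool :=
  match a with
  | Var n => v n
  | Neg a => negb (eval_irr v a)
  | And a1 a2 => eval_irr v a1 && eval_irr v a2
  | Or a1 a2 => eval_irr v a1 || eval_irr v a2
  | Dia _ => false
  | Box _ => true
  end.

Definition refl_frame_validates (L : logic) : Prop :=
  forall a, L a -> forall v, eval_refl v a = true.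
Definition irr_frame_validates (L : logic) : Prop :=
  forall a, L a -> forall v, eval_irr v a = true.

Definition typeA (L : logic) : Prop := refl_frame_validates L.
Definition typeB (L : logic) : Prop :=
  irr_frame_validates L /\ exists n, 1 <= n /\ L (boxn n Bot).

Inductive ML (Phi : list form) : form -> Prop :=
| ML_var : forall n, ML Phi (Var n)
| ML_app : forall phi s, In phi Phi -> (forall x, ML Phi (s x)) ->
    ML Phi (subst s phi).

Definition preceq (L : logic) (Phi Psi : list form) : Prop :=
  forall a, ML Phi a -> exists b, ML Psi b /\ L (Iff a b).

(** M-simple sets; M is given by two booleans (Dia in M, Box in M) *)
Fixpoint propositional (a : form) : bool :=
  match a with
  | Var _ => true
  | Neg a => propositional a
  | And a b | Or a b => propositional a && propositional b
  | Dia _ | Box _ => false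
  end.

Definition M_simple (mD mB : bool) (Phi : list form) : Prop :=
  (forall a, In a Phi ->
      propositional a = true
      \/ (mD = true /\ exists x, a = Dia (Var x))
      \/ (mB = true /\ exists x, a = Box (Var x)))
  /\ (mD = true -> exists x, In (Dia (Var x)) Phi)
  /\ (mB = true -> exists x, In (Box (Var x)) Phi).

Inductive code : Type :=
| cZero : code
| cSucc : code
| cProj : nat -> code
| cComp : code -> list code -> code
| cPrec : code -> code -> code
| cMu : code -> code.

Inductive eval : code -> list nat -> nat -> Prop :=
| ev_zero : forall xs, eval cZero xs 0
| ev_succ : forall x xs, eval cSucc (x :: xs) (S x)
| ev_proj : forall i xs, i < length xs -> eval (cProj i) xs (nth i xs 0)
| ev_comp : forall f gs xs ys z,
    Forall2 (fun g y => eval g xs y) gs ys -> eval f ys z ->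
    eval (cComp f gs) xs z
| ev_prec0 : forall f g xs z, eval f xs z -> eval (cPrec f g) (0 :: xs) z
| ev_precS : forall f g n xs y z,
    eval (cPrec f g) (n :: xs) y -> eval g (n :: y :: xs) z ->
    eval (cPrec f g) (S n :: xs) z
| ev_mu : forall f xs n,
    eval f (n :: xs) 0 ->
    (forall m, m < n -> exists k, eval f (m :: xs) (S k)) ->
    eval (cMu f) xs n.

Definition npair (a b : nat) : nat := (a + b) * (a + b + 1) / 2 + b.

Fixpoint enc_form (a : form) : nat :=
  match a with
  | Var n => npair 0 n
  | Neg a => npair 1 (enc_form a)
  | And a b => npair 2 (npair (enc_form a) (enc_form b))
  | Or a b => npair 3 (npair (enc_form a) (enc_form b))
  | Dia a => npair 4 (enc_form a)
  | Box a => npair 5 (enc_form a)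
  end.

Fixpoint enc_list (l : list form) : nat :=
  match l with
  | [] => 0
  | a :: l => S (npair (enc_form a) (enc_list l))
  end.

Definition decidable_on (dom : list form -> Prop)
    (P : list form -> list form -> Prop) : Prop :=
  exists c : code, forall Phi Psi, dom Phi -> dom Psi ->
    (P Phi Psi /\ eval c [npair (enc_list Phi) (enc_list Psi)] 1)
    \/ (~ P Phi Psi /\ eval c [npair (enc_list Phi) (enc_list Psi)] 0).

(* Main.v *)
Require Import Defs.
From Stdlib Require Import List Arith Lia Morphisms Setoid Bool Classical ClassicalEpsilon.
Import ListNotations.
Set Warnings "-deprecated".

Definition rep (k : nat) (f : list nat -> nat) : Prop :=
  exists c, forall xs, length xs = k -> eval c xs (f xs).

Lemma rep_ext k f g : rep k f -> (forall xs, length xs = k -> f xs = g xs) -> rep k g.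
Proof. intros [c Hc] H. exists c. intros xs Hl. rewrite <- H by exact Hl. auto. Qed.

Lemma rep_proj k i : i < k -> rep k (fun xs => nth i xs 0).
Proof. intros Hi. exists (cProj i). intros xs Hl. apply ev_proj. lia. Qed.

Lemma rep_const k n : rep k (fun _ => n).
Proof.
  induction n as [|n [c Hc]].
  - exists cZero. intros. apply ev_zero.
  - exists (cComp cSucc [c]). intros xs Hl. eapply ev_comp.
    + constructor. apply Hc; auto. constructor.
    + apply ev_succ.
Qed.

Lemma rep_comp k f gs : rep (length gs) f -> Forall (rep k) gs ->
  rep k (fun xs => f (map (fun g => g xs) gs)).
Proof.
  intros [cf Hf] Hgs.
  assert (exists cs, Forall2 (fun g c => forall xs, length xs = k -> eval c xs (g xs)) gs cs) as [cs Hcs].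
  { clear Hf. induction Hgs as [|g gs Hg HF IH].
    - exists []. constructor.
    - destruct Hg as [c Hc]. destruct IH as [cs0 Hcs0]. exists (c :: cs0). constructor; auto. }
  exists (cComp cf cs). intros xs Hl. apply ev_comp with (ys := map (fun g => g xs) gs).
  - clear Hf Hgs. induction Hcs; simpl; constructor; auto.
  - apply Hf. rewrite length_map. reflexivity.
Qed.

Lemma rep_prec k g h : rep k g -> rep (S (S k)) h ->
  rep (S k) (fun xs => nat_rec (fun _ => nat) (g (tl xs)) (fun m r => h (m :: r :: tl xs)) (hd 0 xs)).
Proof.
  intros [cg Hg] [ch Hh]. exists (cPrec cg ch). intros xs Hl.
  destruct xs as [|n ys]; [simpl in Hl; discriminate|]. simpl in Hl |- *.
  induction n as [|n IH].
  - apply ev_prec0. apply Hg. lia.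
  - simpl. eapply ev_precS. apply IH. apply Hh. simpl. lia.
Qed.

Lemma map_nth_seq (l : list nat) : map (fun i => nth i l 0) (seq 0 (length l)) = l.
Proof.
  induction l as [|a l IH]; simpl; auto. f_equal.
  rewrite <- seq_shift, map_map. simpl. exact IH.
Qed.

Definition projs (c k : nat) : list (list nat -> nat) :=
  map (fun i => fun xs => nth (i + c) xs 0) (seq 0 k).

Lemma projs_rep c k m : c + k <= m -> Forall (rep m) (projs c k).
Proof.
  intros H. unfold projs. apply Forall_forall. intros g Hg.
  apply in_map_iff in Hg as [i [<- Hi]]. apply in_seq in Hi. apply rep_proj. lia.
Qed.

Lemma projs_map c k (pre l : list nat) : length pre = c -> length l = k ->
  map (fun g => g (pre ++ l)) (projs c k) = l.
Proof.
  intros Hp Hl. unfold projs. rewrite map_map.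
  transitivity (map (fun i => nth i l 0) (seq 0 (length l))); [|apply map_nth_seq].
  rewrite Hl. apply map_ext. intros i.
  rewrite app_nth2 by lia. f_equal. lia.
Qed.

Lemma projs_length c k : length (projs c k) = k.
Proof. unfold projs. rewrite length_map, length_seq. auto. Qed.

Lemma rep_succ1 : rep 1 (fun xs => S (nth 0 xs 0)).
Proof. exists cSucc. intros [|x [|]] Hl; simpl in Hl; try discriminate. apply ev_succ. Qed.

Lemma rep_add2 : rep 2 (fun xs => nth 0 xs 0 + nth 1 xs 0).
Proof.
  assert (H : rep 2 (fun xs => nat_rec (fun _ => nat) ((fun ys => nth 0 ys 0) (tl xs))
             (fun m r => (fun zs => S (nth 1 zs 0)) (m :: r :: tl xs)) (hd 0 xs))).
  { apply (rep_prec 1 (fun ys => nth 0 ys 0) (fun zs => S (nth 1 zs 0))). apply rep_proj; lia.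
    eapply rep_ext. apply (rep_comp 3 (fun ys => S (nth 0 ys 0)) [fun zs => nth 1 zs 0]). apply rep_succ1. constructor; [apply rep_proj; lia| constructor].
    intros; reflexivity. }
  eapply rep_ext; [exact H|]. intros [|n [|y [|]]] Hl; simpl in Hl; try discriminate.
  simpl. induction n; simpl; auto.
Qed.

Lemma rep_mul2 : rep 2 (fun xs => nth 0 xs 0 * nth 1 xs 0).
Proof.
  assert (H : rep 2 (fun xs => nat_rec (fun _ => nat) ((fun ys => 0) (tl xs))
             (fun m r => (fun zs => nth 1 zs 0 + nth 2 zs 0) (m :: r :: tl xs)) (hd 0 xs))).
  { apply (rep_prec 1 (fun _ => 0) (fun zs => nth 1 zs 0 + nth 2 zs 0)). apply rep_const.
    eapply rep_ext. apply (rep_comp 3 (fun ys => nth 0 ys 0 + nth 1 ys 0) [fun zs => nth 1 zs 0; fun zs => nth 2 zs 0]). apply rep_add2. constructor; [apply rep_proj; lia| constructor; [apply rep_proj; lia|constructor]].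
    intros; reflexivity. }
  eapply rep_ext; [exact H|]. intros [|n [|y [|]]] Hl; simpl in Hl; try discriminate.
  simpl. induction n; simpl; lia.
Qed.

Lemma rep_pred1 : rep 1 (fun xs => pred (nth 0 xs 0)).
Proof.
  assert (H : rep 1 (fun xs => nat_rec (fun _ => nat) ((fun ys => 0) (tl xs))
             (fun m r => (fun zs => nth 0 zs 0) (m :: r :: tl xs)) (hd 0 xs))).
  { apply (rep_prec 0 (fun _ => 0) (fun zs => nth 0 zs 0)). apply rep_const. apply rep_proj; lia. }
  eapply rep_ext; [exact H|]. intros [|n [|]] Hl; simpl in Hl; try discriminate.
  simpl. destruct n; simpl; auto.
Qed.

Lemma rep_sub2 : rep 2 (fun xs => nth 0 xs 0 - nth 1 xs 0).
Proof.
  assert (H : rep 2 (fun xs => nat_rec (fun _ => nat) ((fun ys => nth 0 ys 0) (tl xs))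
             (fun m r => (fun zs => pred (nth 1 zs 0)) (m :: r :: tl xs)) (hd 0 xs))).
  { apply (rep_prec 1 (fun ys => nth 0 ys 0) (fun zs => pred (nth 1 zs 0))). apply rep_proj; lia.
    eapply rep_ext. apply (rep_comp 3 (fun ys => pred (nth 0 ys 0)) [fun zs => nth 1 zs 0]). apply rep_pred1. constructor; [apply rep_proj; lia| constructor].
    intros; reflexivity. }
  eapply rep_ext. apply (rep_comp 2 (fun ys => nat_rec (fun _ => nat) (nth 0 (tl ys) 0)
        (fun m r => pred (nth 1 (m :: r :: tl ys) 0)) (hd 0 ys)) [fun zs => nth 1 zs 0; fun zs => nth 0 zs 0]). exact H. constructor; [apply rep_proj; lia| constructor; [apply rep_proj; lia|constructor]].
  intros [|x [|y [|]]] Hl; simpl in Hl; try discriminate.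
  simpl. induction y; simpl; lia.
Qed.

Lemma rep_bin k (op : nat -> nat -> nat) f g :
  rep 2 (fun xs => op (nth 0 xs 0) (nth 1 xs 0)) -> rep k f -> rep k g -> rep k (fun xs => op (f xs) (g xs)).
Proof.
  intros Hop Hf Hg.
  eapply rep_ext. apply (rep_comp k (fun ys => op (nth 0 ys 0) (nth 1 ys 0)) [f; g]). exact Hop. repeat constructor; auto. intros; reflexivity.
Qed.

Inductive exp : Type :=
| EV (i : nat) | EC (n : nat)
| EAdd (a b : exp) | ESub (a b : exp) | EMul (a b : exp)
| ESum (b body : exp) | EIter (n init step : exp) | ELet (a body : exp).

Fixpoint bsum (n : nat) (f : nat -> nat) : nat :=
  match n with 0 => 0 | S m => bsum m f + f m end.

Definition push (x : nat) (env : nat -> nat) : nat -> nat :=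
  fun i => match i with 0 => x | S j => env j end.

Fixpoint den (e : exp) (env : nat -> nat) : nat :=
  match e with
  | EV i => env i
  | EC n => n
  | EAdd a b => den a env + den b env
  | ESub a b => den a env - den b env
  | EMul a b => den a env * den b env
  | ESum b body => bsum (den b env) (fun i => den body (push i env))
  | EIter n init step => Nat.iter (den n env) (fun s => den step (push s env)) (den init env)
  | ELet a body => den body (push (den a env) env)
  end.

Definition envOf (l : list nat) : nat -> nat := fun i => nth i l 0.

Lemma push_envOf x l : push x (envOf l) = envOf (x :: l).
Proof. reflexivity. Qed.

Lemma rep_shift_body k (B : list nat -> nat) : rep (S k) B ->
  rep (S (S k)) (fun xs => B (nth 0 xs 0 :: tl (tl xs))).
Proof.
  intros HB.
  eapply rep_ext.
  - apply (rep_comp (S (S k)) B ((fun ys => nth 0 ys 0) :: projs 2 k)). simpl. rewrite projs_length. exact HB.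
    constructor. apply rep_proj; lia. apply projs_rep; lia.
  - intros [|m [|r l]] Hl; simpl in Hl; try discriminate. simpl. f_equal. f_equal.
    apply (projs_map 2 k [m; r] l); simpl; lia.
Qed.

Lemma rep_shift_body2 k (B : list nat -> nat) : rep (S k) B ->
  rep (S (S k)) (fun xs => B (nth 1 xs 0 :: tl (tl xs))).
Proof.
  intros HB.
  eapply rep_ext.
  - apply (rep_comp (S (S k)) B ((fun ys => nth 1 ys 0) :: projs 2 k)). simpl. rewrite projs_length. exact HB.
    constructor. apply rep_proj; lia. apply projs_rep; lia.
  - intros [|m [|r l]] Hl; simpl in Hl; try discriminate. simpl. f_equal. f_equal.
    apply (projs_map 2 k [m; r] l); simpl; lia.
Qed.

Lemma rep_cons k (A B : list nat -> nat) : rep k A -> rep (S k) B ->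
  rep k (fun xs => B (A xs :: xs)).
Proof.
  intros HA HB.
  eapply rep_ext.
  - apply (rep_comp k B (A :: projs 0 k)). simpl. rewrite projs_length. exact HB.
    constructor. exact HA. apply projs_rep; lia.
  - intros l Hl. simpl. f_equal. f_equal. apply (projs_map 0 k [] l); simpl; lia.
Qed.

Lemma iter_rec (f : nat -> nat) n x : Nat.iter n f x = nat_rec (fun _ => nat) x (fun _ r => f r) n.
Proof. induction n; simpl; auto. Qed.

Theorem compile : forall e k, rep k (fun l => den e (envOf l)).
Proof.
  induction e; intros k; simpl.
  - destruct (Nat.lt_ge_cases i k).
    + apply rep_proj; auto.
    + apply (rep_ext _ (fun _ => 0)). apply rep_const. intros. unfold envOf. rewrite nth_overflow; lia.
  - apply rep_const.
  - apply rep_bin; auto. apply rep_add2.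
  - apply rep_bin; auto. apply rep_sub2.
  - apply rep_bin; auto. apply rep_mul2.
  -
    set (B := fun l => den e2 (envOf l)).
    assert (HG : rep (S k) (fun xs => nat_rec (fun _ => nat) ((fun _ => 0) (tl xs))
         (fun m r => (fun zs => nth 1 zs 0 + B (nth 0 zs 0 :: tl (tl zs))) (m :: r :: tl xs)) (hd 0 xs))).
    { apply (rep_prec k (fun _ => 0) (fun zs => nth 1 zs 0 + B (nth 0 zs 0 :: tl (tl zs)))). apply rep_const.
      apply (rep_bin _ Nat.add (fun zs => nth 1 zs 0) (fun zs => B (nth 0 zs 0 :: tl (tl zs)))). apply rep_add2. apply rep_proj; lia.
      apply rep_shift_body. apply IHe2. }
    eapply rep_ext. apply (rep_cons k _ _ (IHe1 k) HG).
    intros l Hl. simpl. generalize (den e1 (envOf l)). intros n. induction n; simpl; auto.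
  -
    set (B := fun l => den e3 (envOf l)).
    assert (HG : rep (S k) (fun xs => nat_rec (fun _ => nat) ((fun l => den e2 (envOf l)) (tl xs))
         (fun m r => (fun zs => B (nth 1 zs 0 :: tl (tl zs))) (m :: r :: tl xs)) (hd 0 xs))).
    { apply (rep_prec k (fun l => den e2 (envOf l)) (fun zs => B (nth 1 zs 0 :: tl (tl zs)))). apply IHe2. apply rep_shift_body2. apply IHe3. }
    eapply rep_ext. apply (rep_cons k _ _ (IHe1 k) HG).
    intros l Hl. simpl. rewrite iter_rec. reflexivity.
  - eapply rep_ext. apply (rep_cons k _ _ (IHe1 k) (IHe2 (S k))). intros; reflexivity.
Qed.

Fixpoint shift (c : nat) (e : exp) : exp :=
  match e with
  | EV i => if i <? c then EV i else EV (S i)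
  | EC n => EC n
  | EAdd a b => EAdd (shift c a) (shift c b)
  | ESub a b => ESub (shift c a) (shift c b)
  | EMul a b => EMul (shift c a) (shift c b)
  | ESum b body => ESum (shift c b) (shift (S c) body)
  | EIter n i s => EIter (shift c n) (shift c i) (shift (S c) s)
  | ELet a body => ELet (shift c a) (shift (S c) body)
  end.

Definition ins (c x : nat) (env : nat -> nat) : nat -> nat :=
  fun i => if i <? c then env i else if i =? c then x else env (i - 1).

Lemma bsum_ext n f g : (forall i, f i = g i) -> bsum n f = bsum n g.
Proof. intros H. induction n; simpl; auto; rewrite IHn, ?H; auto. Qed.

Lemma iter_ext n (f g : nat -> nat) x : (forall i, f i = g i) -> Nat.iter n f x = Nat.iter n g x.
Proof. intros H. induction n; simpl; auto; rewrite IHn, ?H; auto. Qed.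

#[export] Instance bsum_proper : Proper (eq ==> pointwise_relation nat eq ==> eq) bsum.
Proof. intros n m -> f g H. apply bsum_ext. exact H. Qed.

#[export] Instance iter_proper n : Proper (pointwise_relation nat eq ==> eq ==> eq) (@Nat.iter n nat).
Proof. intros f g H x y ->. apply iter_ext. exact H. Qed.

Lemma den_ext e : forall env1 env2, (forall i, env1 i = env2 i) -> den e env1 = den e env2.
Proof.
  induction e; intros env1 env2 H; simpl; auto;
  try (rewrite (IHe1 env1 env2 H), (IHe2 env1 env2 H); reflexivity).
  - rewrite (IHe1 env1 env2 H). apply bsum_ext. intros j. apply IHe2. intros [|i]; simpl; auto.
  - rewrite (IHe1 env1 env2 H), (IHe2 env1 env2 H). apply iter_ext. intros j. apply IHe3. intros [|i]; simpl; auto.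
  - rewrite (IHe1 env1 env2 H). apply IHe2. intros [|i]; simpl; auto.
Qed.

Lemma push_ins j c x env i : push j (ins c x env) i = ins (S c) x (push j env) i.
Proof.
  destruct i as [|i]; [reflexivity|]. unfold ins. simpl push.
  destruct (Nat.ltb_spec i c); destruct (Nat.ltb_spec (S i) (S c)); try lia; auto.
  destruct (Nat.eqb_spec i c); destruct (Nat.eqb_spec (S i) (S c)); try lia; auto.
  destruct i; [lia|]. simpl. f_equal. lia.
Qed.

Lemma den_shift e : forall c x env, den (shift c e) (ins c x env) = den e env.
Proof.
  induction e; intros c x env; simpl; auto;
  try (rewrite IHe1, IHe2; reflexivity).
  - destruct (Nat.ltb_spec i c); simpl; unfold ins.
    + destruct (Nat.ltb_spec i c); [reflexivity|lia].
    + destruct (Nat.ltb_spec (S i) c); [lia|]. destruct (Nat.eqb_spec (S i) c); [lia|]. f_equal; lia.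
  - rewrite IHe1. apply bsum_ext. intros j.
    rewrite <- (IHe2 (S c) x (push j env)). apply den_ext.
    apply push_ins.
  - rewrite IHe1, IHe2. apply iter_ext. intros j.
    rewrite <- (IHe3 (S c) x (push j env)). apply den_ext.
    apply push_ins.
  - rewrite IHe1. rewrite <- (IHe2 (S c) x (push _ env)). apply den_ext.
    apply push_ins.
Qed.

Notation sh := (shift 0).

Lemma den_sh0 e x env : den (sh e) (push x env) = den e env.
Proof.
  rewrite <- (den_shift e 0 x env). apply den_ext. intros [|i]; unfold ins; simpl; auto;
  f_equal. lia.
Qed.

Lemma den_sh1 e a b env : den (shift 1 e) (push a (push b env)) = den e (push a env).
Proof.
  rewrite <- (den_shift e 1 b (push a env)). apply den_ext.
  intros [|[|i]]; unfold ins; simpl; auto; f_equal; lia.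
Qed.

Lemma den_sh2 e a b c env : den (shift 2 e) (push a (push b (push c env))) = den e (push a (push b env)).
Proof.
  rewrite <- (den_shift e 2 c (push a (push b env))). apply den_ext.
  intros [|[|[|i]]]; unfold ins; simpl; auto; f_equal; lia.
Qed.

Definition sgn (x : nat) : nat := if x =? 0 then 0 else 1.
Definition b2n (b : bool) : nat := if b then 1 else 0.

Definition esg a := ESub (EC 1) (ESub (EC 1) a).
Definition enot a := ESub (EC 1) a.
Definition eeq a b := enot (EAdd (ESub a b) (ESub b a)).
Definition ele a b := enot (ESub a b).
Definition elt a b := ele (EAdd a (EC 1)) b.

Lemma den_esg a env : den (esg a) env = sgn (den a env).
Proof. unfold esg, sgn; cbn [den]. destruct (den a env =? 0) eqn:E; [apply Nat.eqb_eq in E|apply Nat.eqb_neq in E]; lia. Qed.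
Lemma den_enot a env : den (enot a) env = 1 - den a env.
Proof. reflexivity. Qed.
Lemma den_eeq a b env : den (eeq a b) env = b2n (den a env =? den b env).
Proof. unfold eeq, enot, b2n; cbn [den]. destruct (den a env =? den b env) eqn:E; [apply Nat.eqb_eq in E|apply Nat.eqb_neq in E]; lia. Qed.
Lemma den_ele a b env : den (ele a b) env = b2n (den a env <=? den b env).
Proof. unfold ele, enot, b2n; cbn [den]. destruct (den a env <=? den b env) eqn:E; [apply Nat.leb_le in E|apply Nat.leb_gt in E]; lia. Qed.
Lemma den_elt a b env : den (elt a b) env = b2n (den a env <? den b env).
Proof. unfold elt. rewrite den_ele. cbn [den]. rewrite Nat.add_1_r. reflexivity. Qed.

Global Arguments esg : simpl never.
Global Arguments enot : simpl never.
Global Arguments eeq : simpl never.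
Global Arguments ele : simpl never.
Global Arguments elt : simpl never.

Create HintDb dendb.
#[export] Hint Rewrite den_sh0 den_sh1 den_sh2 den_esg den_enot den_eeq den_ele den_elt : dendb.

Ltac dsimp := repeat progress (cbn [den push]; try rewrite_strat (topdown (hints dendb))).

Definition ediv x d := ESum (EAdd x (EC 1)) (EMul (EV 0) (EMul (ele (EMul (EV 0) (sh d)) (sh x)) (elt (sh x) (EMul (EAdd (EV 0) (EC 1)) (sh d))))).
Definition ndiv X D := bsum (X + 1) (fun q => q * (b2n (q * D <=? X) * b2n (X <? (q + 1) * D))).
Lemma den_ediv x d env : den (ediv x d) env = ndiv (den x env) (den d env).
Proof. unfold ediv, ndiv. dsimp. reflexivity. Qed.

Lemma bsum_zero n f : (forall i, i < n -> f i = 0) -> bsum n f = 0.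
Proof. induction n; simpl; intros H; auto. rewrite IHn, H; auto. Qed.

Lemma bsum_unique n f q : q < n -> (forall i, i < n -> i <> q -> f i = 0) -> bsum n f = f q.
Proof.
  induction n; intros Hq H; [lia|]. simpl.
  destruct (Nat.eq_dec q n) as [->|Hne].
  - rewrite bsum_zero; auto. intros i Hi. apply H; lia.
  - rewrite IHn by (try lia; intros; apply H; lia). rewrite (H n); lia.
Qed.

Lemma bsum_ge n f i : i < n -> f i <= bsum n f.
Proof. induction n; intros H; simpl; [lia|]. destruct (Nat.eq_dec i n); subst; [lia|]. specialize (IHn ltac:(lia)). lia. Qed.

Lemma ndiv_spec X D : 0 < D -> ndiv X D = X / D.
Proof.
  intros HD. unfold ndiv.
  assert (Hq1 : D * (X / D) <= X) by (apply Nat.mul_div_le; lia).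
  assert (Hq2 : X < D * (X / D) + D).
  { pose proof (Nat.div_mod X D ltac:(lia)). pose proof (Nat.mod_upper_bound X D ltac:(lia)). lia. }
  assert (Hq3 : X / D <= X) by (apply Nat.div_le_upper_bound; nia).
  rewrite (bsum_unique _ _ (X / D)); [| lia |].
  - unfold b2n. destruct (Nat.leb_spec (X / D * D) X); [|lia].
    destruct (Nat.ltb_spec X ((X / D + 1) * D)); [lia|nia].
  - intros i Hi Hne. unfold b2n.
    destruct (Nat.leb_spec (i * D) X); [|lia].
    destruct (Nat.ltb_spec X ((i + 1) * D)); [|lia].
    exfalso. apply Hne.
    assert (i <= X / D) by (apply Nat.div_le_lower_bound; nia).
    assert (X / D < i + 1) by (apply Nat.div_lt_upper_bound; nia). lia.
Qed.

Global Arguments ediv : simpl never.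
#[export] Hint Rewrite den_ediv : dendb.

Definition emod x d := ESub x (EMul d (ediv x d)).
Definition nmod X D := X - D * ndiv X D.
Lemma den_emod x d env : den (emod x d) env = nmod (den x env) (den d env).
Proof. unfold emod, nmod. dsimp. reflexivity. Qed.
Lemma nmod_spec X D : 0 < D -> nmod X D = X mod D.
Proof. intros H. unfold nmod. rewrite ndiv_spec by auto. rewrite (Nat.mod_eq X D) by lia. reflexivity. Qed.
Global Arguments emod : simpl never.
#[export] Hint Rewrite den_emod : dendb.

Definition epow b e := EIter e (EC 1) (EMul (EV 0) (sh b)).
Lemma den_epow b e env : den (epow b e) env = den b env ^ den e env.
Proof.
  unfold epow. dsimp. generalize (den e env). intros n. induction n; simpl; auto.
  rewrite IHn. lia.
Qed.
Global Arguments epow : simpl never.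
#[export] Hint Rewrite den_epow : dendb.

Definition nbit W J := nmod (ndiv W (2 ^ J)) 2.
Definition ebit w j := emod (ediv w (epow (EC 2) j)) (EC 2).
Lemma den_ebit w j env : den (ebit w j) env = nbit (den w env) (den j env).
Proof. unfold ebit, nbit. dsimp. reflexivity. Qed.
Lemma nbit_spec W J : nbit W J = (W / 2 ^ J) mod 2.
Proof. unfold nbit. rewrite nmod_spec, ndiv_spec; auto. apply Nat.neq_0_lt_0, Nat.pow_nonzero. lia. Qed.
Global Arguments ebit : simpl never.
#[export] Hint Rewrite den_ebit : dendb.

Definition enpair a b := EAdd (ediv (EMul (EAdd a b) (EAdd (EAdd a b) (EC 1))) (EC 2)) b.
Lemma den_enpair a b env : den (enpair a b) env = npair (den a env) (den b env).
Proof. unfold enpair, npair. dsimp. rewrite ndiv_spec by lia. reflexivity. Qed.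
Global Arguments enpair : simpl never.
#[export] Hint Rewrite den_enpair : dendb.

Definition tri s := s * (s + 1) / 2.
Lemma tri_S s : tri (S s) = tri s + S s.
Proof.
  unfold tri. replace (S s * (S s + 1)) with (s * (s + 1) + S s * 2) by nia.
  rewrite Nat.div_add by lia. reflexivity.
Qed.
Lemma tri_ge s : s <= tri s.
Proof. induction s; [unfold tri; simpl; lia|]. rewrite tri_S. lia. Qed.
Lemma tri_mono s s' : s <= s' -> tri s <= tri s'.
Proof. induction 1; auto. rewrite tri_S. lia. Qed.
Lemma npair_tri a b : npair a b = tri (a + b) + b.
Proof. reflexivity. Qed.

Lemma npair_inj a b a' b' : npair a b = npair a' b' -> a = a' /\ b = b'.
Proof.
  rewrite !npair_tri. intros H.
  assert (a + b = a' + b').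
  { destruct (Nat.lt_total (a + b) (a' + b')) as [Hl|[Hl|Hl]]; auto.
    - pose proof (tri_mono (S (a + b)) (a' + b') Hl). rewrite tri_S in H0. lia.
    - pose proof (tri_mono (S (a' + b')) (a + b) Hl). rewrite tri_S in H0. lia. }
  rewrite H0 in H. lia.
Qed.

Lemma npair_ge1 a b : a <= npair a b.
Proof. rewrite npair_tri. pose proof (tri_ge (a + b)). lia. Qed.
Lemma npair_ge2 a b : b <= npair a b.
Proof. rewrite npair_tri. lia. Qed.
Lemma npair_gt t x : 1 <= t -> x < npair t x.
Proof. intros. rewrite npair_tri. pose proof (tri_ge (t + x)). lia. Qed.

Definition nfst Z := bsum (Z + 1) (fun a => a * sgn (bsum (Z + 1) (fun b => b2n (npair a b =? Z)))).
Definition nsnd Z := bsum (Z + 1) (fun b => b * sgn (bsum (Z + 1) (fun a => b2n (npair a b =? Z)))).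
Definition efst z := ESum (EAdd z (EC 1)) (EMul (EV 0) (esg (ESum (EAdd (sh z) (EC 1)) (eeq (enpair (EV 1) (EV 0)) (sh (sh z)))))).
Definition esnd z := ESum (EAdd z (EC 1)) (EMul (EV 0) (esg (ESum (EAdd (sh z) (EC 1)) (eeq (enpair (EV 0) (EV 1)) (sh (sh z)))))).
Lemma den_efst z env : den (efst z) env = nfst (den z env).
Proof. unfold efst, nfst. dsimp. reflexivity. Qed.
Lemma den_esnd z env : den (esnd z) env = nsnd (den z env).
Proof. unfold esnd, nsnd. dsimp. reflexivity. Qed.
Global Arguments efst : simpl never.
Global Arguments esnd : simpl never.
#[export] Hint Rewrite den_efst den_esnd : dendb.

Lemma sgn_pos x : 0 < x -> sgn x = 1.
Proof. unfold sgn. destruct x; simpl; auto; lia. Qed.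

Lemma nfst_npair a b : nfst (npair a b) = a.
Proof.
  unfold nfst. pose proof (npair_ge1 a b). pose proof (npair_ge2 a b).
  rewrite (bsum_unique _ _ a); [| lia |].
  - rewrite sgn_pos. lia. eapply Nat.lt_le_trans; [|apply (bsum_ge _ _ b); lia].
    unfold b2n. rewrite Nat.eqb_refl. lia.
  - intros i Hi Hne. rewrite bsum_zero. unfold sgn; simpl; lia.
    intros j Hj. unfold b2n. destruct (Nat.eqb_spec (npair i j) (npair a b)); auto.
    apply npair_inj in e. lia.
Qed.

Lemma nsnd_npair a b : nsnd (npair a b) = b.
Proof.
  unfold nsnd. pose proof (npair_ge1 a b). pose proof (npair_ge2 a b).
  rewrite (bsum_unique _ _ b); [| lia |].
  - rewrite sgn_pos. lia. eapply Nat.lt_le_trans; [|apply (bsum_ge _ _ a); lia].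
    unfold b2n. rewrite Nat.eqb_refl. lia.
  - intros i Hi Hne. rewrite bsum_zero. unfold sgn; simpl; lia.
    intros j Hj. unfold b2n. destruct (Nat.eqb_spec (npair j i) (npair a b)); auto.
    apply npair_inj in e. lia.
Qed.

Fixpoint hist (g : nat -> nat -> nat) (n : nat) : nat :=
  match n with 0 => 0 | S m => npair (g m (hist g m)) (hist g m) end.
Definition covF (g : nat -> nat -> nat) (m : nat) : nat := g m (hist g m).
Definition look H N I := nfst (Nat.iter (N - 1 - I) nsnd H).

Lemma hist_ext g1 g2 n : (forall a b, g1 a b = g2 a b) -> hist g1 n = hist g2 n.
Proof. intros H. induction n; simpl; auto. rewrite IHn, H. auto. Qed.
Lemma covF_ext g1 g2 n : (forall a b, g1 a b = g2 a b) -> covF g1 n = covF g2 n.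
Proof. intros H. unfold covF. rewrite (hist_ext g1 g2) by auto. auto. Qed.

#[export] Instance covF_proper : Proper (pointwise_relation nat (pointwise_relation nat eq) ==> eq ==> eq) covF.
Proof. intros f g H x y ->. apply covF_ext. exact H. Qed.

Lemma look_hist g n i : i < n -> look (hist g n) n i = covF g i.
Proof.
  intros H. unfold look.
  replace (hist g n) with (hist g (S i + (n - 1 - i))) by (f_equal; lia). generalize (n - 1 - i). intros d.
  assert (Nat.iter d nsnd (hist g (S i + d)) = hist g (S i)).
  { induction d. rewrite Nat.add_0_r. auto.
    rewrite Nat.add_succ_r, Nat.iter_succ_r.
    change (hist g (S (S i + d))) with (npair (g (S i + d) (hist g (S i + d))) (hist g (S i + d))).
    rewrite nsnd_npair. exact IHd. }
  rewrite H0. simpl. rewrite nfst_npair. reflexivity.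
Qed.

Definition elook h n i := efst (EIter (ESub (ESub n (EC 1)) i) h (esnd (EV 0))).
Lemma den_elook h n i env : den (elook h n i) env = look (den h env) (den n env) (den i env).
Proof. unfold elook, look. dsimp. reflexivity. Qed.
Global Arguments elook : simpl never.
#[export] Hint Rewrite den_elook : dendb.

Definition ecov arg g := efst (esnd (EIter (EAdd arg (EC 1)) (enpair (EC 0) (EC 0))
  (ELet (efst (EV 0)) (ELet (esnd (EV 1)) (enpair (EAdd (EV 1) (EC 1)) (enpair (shift 2 g) (EV 0))))))).
Lemma den_ecov arg g env : den (ecov arg g) env = covF (fun n h => den g (push h (push n env))) (den arg env).
Proof.
  unfold ecov. dsimp. set (g' := fun n h => den g (push h (push n env))).
  assert (forall m, Nat.iter m (fun s => npair (nfst s + 1) (npair (den g (push (nsnd s) (push (nfst s) env))) (nsnd s))) (npair 0 0) = npair m (hist g' m)).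
  { induction m. reflexivity. simpl Nat.iter. rewrite IHm, nfst_npair, nsnd_npair.
    rewrite Nat.add_1_r. reflexivity. }
  rewrite H. rewrite Nat.add_1_r. rewrite nsnd_npair. simpl hist. rewrite nfst_npair. reflexivity.
Qed.
Global Arguments ecov : simpl never.
#[export] Hint Rewrite den_ecov : dendb.

Definition tg n := nfst n.
Definition ar n := nsnd n.

Definition gEvalN W n h :=
  b2n (nfst n =? 0) * nbit W (nsnd n)
  + (b2n (nfst n =? 1) * (1 - look h n (nsnd n))
  + (b2n (nfst n =? 2) * (look h n (nfst (nsnd n)) * look h n (nsnd (nsnd n)))
  + (b2n (nfst n =? 3) * sgn (look h n (nfst (nsnd n)) + look h n (nsnd (nsnd n)))
  + (b2n (nfst n =? 4) * look h n (nsnd n) + b2n (nfst n =? 5) * look h n (nsnd n))))).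
Definition evalN W f := covF (gEvalN W) f.

Definition gEval w :=
  let t := efst (EV 1) in let x := esnd (EV 1) in
  let L i := elook (EV 0) (EV 1) i in
  EAdd (EMul (eeq t (EC 0)) (ebit w x))
  (EAdd (EMul (eeq t (EC 1)) (enot (L x)))
  (EAdd (EMul (eeq t (EC 2)) (EMul (L (efst x)) (L (esnd x))))
  (EAdd (EMul (eeq t (EC 3)) (esg (EAdd (L (efst x)) (L (esnd x)))))
  (EAdd (EMul (eeq t (EC 4)) (L x)) (EMul (eeq t (EC 5)) (L x)))))).
Definition evalE w f := ecov f (gEval (sh (sh w))).
Lemma den_evalE w f env : den (evalE w f) env = evalN (den w env) (den f env).
Proof. unfold evalE, gEval, evalN. dsimp. apply covF_ext. intros n h. unfold gEvalN. reflexivity. Qed.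
Global Arguments evalE : simpl never.
#[export] Hint Rewrite den_evalE : dendb.

Definition gMvN n h :=
  b2n (nfst n =? 0) * (nsnd n + 1)
  + (b2n (nfst n =? 1) * look h n (nsnd n)
  + (b2n (nfst n =? 2) * (look h n (nfst (nsnd n)) + (look h n (nsnd (nsnd n)) - look h n (nfst (nsnd n))))
  + (b2n (nfst n =? 3) * (look h n (nfst (nsnd n)) + (look h n (nsnd (nsnd n)) - look h n (nfst (nsnd n))))
  + (b2n (nfst n =? 4) * look h n (nsnd n) + b2n (nfst n =? 5) * look h n (nsnd n))))).
Definition mvN f := covF gMvN f.
Definition gMv :=
  let t := efst (EV 1) in let x := esnd (EV 1) in
  let L i := elook (EV 0) (EV 1) i in
  EAdd (EMul (eeq t (EC 0)) (EAdd x (EC 1)))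
  (EAdd (EMul (eeq t (EC 1)) (L x))
  (EAdd (EMul (eeq t (EC 2)) (EAdd (L (efst x)) (ESub (L (esnd x)) (L (efst x)))))
  (EAdd (EMul (eeq t (EC 3)) (EAdd (L (efst x)) (ESub (L (esnd x)) (L (efst x)))))
  (EAdd (EMul (eeq t (EC 4)) (L x)) (EMul (eeq t (EC 5)) (L x)))))).
Definition mvE f := ecov f gMv.
Lemma den_mvE f env : den (mvE f) env = mvN (den f env).
Proof. unfold mvE, gMv, mvN. dsimp. apply covF_ext. intros n h. unfold gMvN. reflexivity. Qed.
Global Arguments mvE : simpl never.
#[export] Hint Rewrite den_mvE : dendb.

Definition gPropN n h :=
  b2n (nfst n =? 0)
  + (b2n (nfst n =? 1) * look h n (nsnd n)
  + (b2n (nfst n =? 2) * (look h n (nfst (nsnd n)) * look h n (nsnd (nsnd n)))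
  + b2n (nfst n =? 3) * (look h n (nfst (nsnd n)) * look h n (nsnd (nsnd n))))).
Definition propN f := covF gPropN f.
Definition gProp :=
  let t := efst (EV 1) in let x := esnd (EV 1) in
  let L i := elook (EV 0) (EV 1) i in
  EAdd (eeq t (EC 0))
  (EAdd (EMul (eeq t (EC 1)) (L x))
  (EAdd (EMul (eeq t (EC 2)) (EMul (L (efst x)) (L (esnd x))))
  (EMul (eeq t (EC 3)) (EMul (L (efst x)) (L (esnd x)))))).
Definition propE f := ecov f gProp.
Lemma den_propE f env : den (propE f) env = propN (den f env).
Proof. unfold propE, gProp, propN. dsimp. apply covF_ext. intros n h. unfold gPropN. reflexivity. Qed.
Global Arguments propE : simpl never.
#[export] Hint Rewrite den_propE : dendb.

Definition gSumN (p : nat -> nat) n h := sgn n * (p (nfst (n - 1)) + look h n (nsnd (n - 1))).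
Definition sumLN p z := covF (gSumN p) z.
Lemma sumLN_ext p q z : (forall x, p x = q x) -> sumLN p z = sumLN q z.
Proof. intros H. unfold sumLN. apply covF_ext. intros. unfold gSumN. rewrite H. auto. Qed.
#[export] Instance sumLN_proper : Proper (pointwise_relation nat eq ==> eq ==> eq) sumLN.
Proof. intros p q H x y ->. apply sumLN_ext. exact H. Qed.

Definition esumL l body := ecov l (EMul (esg (EV 1)) (EAdd (ELet (efst (ESub (EV 1) (EC 1))) (shift 1 (shift 1 body)))
   (elook (EV 0) (EV 1) (esnd (ESub (EV 1) (EC 1)))))).
Lemma den_esumL l body env : den (esumL l body) env = sumLN (fun x => den body (push x env)) (den l env).
Proof. unfold esumL, sumLN. dsimp. apply covF_ext. intros n h. unfold gSumN. reflexivity. Qed.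
Global Arguments esumL : simpl never.
#[export] Hint Rewrite den_esumL : dendb.

Lemma gEvalN_eq W n h : gEvalN W n h = ltac:(let t := eval unfold gEvalN in (gEvalN W n h) in exact t).
Proof. reflexivity. Qed.
Lemma gMvN_eq n h : gMvN n h = ltac:(let t := eval unfold gMvN in (gMvN n h) in exact t).
Proof. reflexivity. Qed.
Lemma gPropN_eq n h : gPropN n h = ltac:(let t := eval unfold gPropN in (gPropN n h) in exact t).
Proof. reflexivity. Qed.
Fixpoint mv (a : form) : nat :=
  match a with
  | Var n => S n
  | Neg a | Dia a | Box a => mv a
  | And a b | Or a b => Nat.max (mv a) (mv b)
  end.

Lemma nbit_01 W J : nbit W J = 0 \/ nbit W J = 1.
Proof. rewrite nbit_spec. pose proof (Nat.mod_upper_bound (W / 2 ^ J) 2). lia. Qed.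

Definition vb W : nat -> bool := fun i => nbit W i =? 1.

Ltac cov_step :=
  unfold covF; try rewrite !nfst_npair; try rewrite !nsnd_npair.

Lemma enc_lt1 t a : 1 <= t -> a < npair t a.
Proof. apply npair_gt. Qed.
Lemma enc_lt2 t a b : 1 <= t -> a < npair t (npair a b).
Proof. intros. pose proof (npair_ge1 a b). pose proof (npair_gt t (npair a b) H). lia. Qed.
Lemma enc_lt3 t a b : 1 <= t -> b < npair t (npair a b).
Proof. intros. pose proof (npair_ge2 a b). pose proof (npair_gt t (npair a b) H). lia. Qed.

Lemma evalN_enc W a : evalN W (enc_form a) = b2n (eval_refl (vb W) a).
Proof.
  unfold evalN. induction a; simpl enc_form; cov_step; rewrite gEvalN_eq; rewrite ?nfst_npair, ?nsnd_npair, ?nfst_npair, ?nsnd_npair; simpl Nat.eqb; cbn [b2n eval_refl]; rewrite ?Nat.mul_0_l, ?Nat.mul_1_l, ?Nat.add_0_r, ?Nat.add_0_l.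
  - unfold vb. destruct (nbit_01 W n) as [-> | ->]; reflexivity.
  - rewrite look_hist by (apply enc_lt1; lia). rewrite IHa. destruct (eval_refl (vb W) a); reflexivity.
  - rewrite !look_hist by (first [apply enc_lt2 | apply enc_lt3]; lia). rewrite IHa1, IHa2.
    destruct (eval_refl (vb W) a1), (eval_refl (vb W) a2); reflexivity.
  - rewrite !look_hist by (first [apply enc_lt2 | apply enc_lt3]; lia). rewrite IHa1, IHa2.
    destruct (eval_refl (vb W) a1), (eval_refl (vb W) a2); reflexivity.
  - rewrite look_hist by (apply enc_lt1; lia). rewrite IHa. lia.
  - rewrite look_hist by (apply enc_lt1; lia). rewrite IHa. lia.
Qed.

Lemma mvN_enc a : mvN (enc_form a) = mv a.
Proof.
  unfold mvN. induction a; simpl enc_form; cov_step; rewrite gMvN_eq; rewrite ?nfst_npair, ?nsnd_npair, ?nfst_npair, ?nsnd_npair; simpl Nat.eqb; cbn [b2n mv]; rewrite ?Nat.mul_0_l, ?Nat.mul_1_l, ?Nat.add_0_r, ?Nat.add_0_l.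
  - lia.
  - rewrite look_hist by (apply enc_lt1; lia). rewrite IHa. lia.
  - rewrite !look_hist by (first [apply enc_lt2 | apply enc_lt3]; lia). rewrite IHa1, IHa2. lia.
  - rewrite !look_hist by (first [apply enc_lt2 | apply enc_lt3]; lia). rewrite IHa1, IHa2. lia.
  - rewrite look_hist by (apply enc_lt1; lia). rewrite IHa. lia.
  - rewrite look_hist by (apply enc_lt1; lia). rewrite IHa. lia.
Qed.

Lemma propN_enc a : propN (enc_form a) = b2n (propositional a).
Proof.
  unfold propN. induction a; simpl enc_form; cov_step; rewrite gPropN_eq; rewrite ?nfst_npair, ?nsnd_npair, ?nfst_npair, ?nsnd_npair; simpl Nat.eqb; cbn [b2n propositional]; rewrite ?Nat.mul_0_l, ?Nat.mul_1_l, ?Nat.add_0_r, ?Nat.add_0_l.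
  - reflexivity.
  - rewrite look_hist by (apply enc_lt1; lia). rewrite IHa. lia.
  - rewrite !look_hist by (first [apply enc_lt2 | apply enc_lt3]; lia). rewrite IHa1, IHa2.
    destruct (propositional a1), (propositional a2); reflexivity.
  - rewrite !look_hist by (first [apply enc_lt2 | apply enc_lt3]; lia). rewrite IHa1, IHa2.
    destruct (propositional a1), (propositional a2); reflexivity.
  - reflexivity.
  - reflexivity.
Qed.

Lemma sumLN_enc p l : sumLN p (enc_list l) = fold_right (fun a r => p (enc_form a) + r) 0 l.
Proof.
  unfold sumLN. induction l as [|a l IH]; simpl enc_list.
  - reflexivity.
  - unfold covF at 1. unfold gSumN at 1.
    replace (S (npair (enc_form a) (enc_list l)) - 1) with (npair (enc_form a) (enc_list l)) by lia.
    rewrite nfst_npair, nsnd_npair.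
    rewrite look_hist. rewrite IH. simpl. unfold sgn. simpl. lia.
    pose proof (npair_ge2 (enc_form a) (enc_list l)). lia.
Qed.

Definition Top : form := Or (Var 0) (Neg (Var 0)).
Definition eBot := enc_form Bot.
Definition eTop := enc_form Top.

Definition tabN M F := bsum M (fun j => 2 ^ j * evalN j F).
Definition ptabN M I := bsum M (fun j => 2 ^ j * nbit j I).
Definition S0N k M N := bsum N (fun T => 2 ^ T * sgn (bsum k (fun i => b2n (T =? ptabN M i)))).
Definition compN N a i := nmod (ndiv a (N ^ i)) N.
Definition wN N m a j := bsum m (fun i => 2 ^ i * nbit (compN N a i) j).
Definition composeN M N psi m a := bsum M (fun j => 2 ^ j * evalN (wN N m a j) psi).
Definition CN M N psi S T := sgn (bsum (N ^ mvN psi) (fun a =>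
   b2n (bsum (mvN psi) (fun i => nbit S (compN N a i)) =? mvN psi) * b2n (T =? composeN M N psi (mvN psi) a))).
Definition genN M N Q S T := sgn (sumLN (fun psi => propN psi * CN M N psi S T) Q).
Definition stepN xB xT fD fB M N Q S := bsum N (fun T => 2 ^ T * sgn (nbit S T + (genN M N Q S T
   + (fD * CN M N xB S T + fB * CN M N xT S T)))).
Definition memberN xB xT fD fB Q F :=
  nbit (Nat.iter (2 ^ 2 ^ mvN F + 1) (stepN xB xT fD fB (2 ^ mvN F) (2 ^ 2 ^ mvN F) Q) (S0N (mvN F) (2 ^ mvN F) (2 ^ 2 ^ mvN F))) (tabN (2 ^ mvN F) F).
Definition decideN xB xT fD fB X := 1 - sumLN (fun F => propN F * (1 - memberN xB xT fD fB (nsnd X) F)) (nfst X).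

Definition two := EC 2.
Definition tabE M f := ESum M (EMul (epow two (EV 0)) (evalE (EV 0) (sh f))).
Lemma den_tabE M f env : den (tabE M f) env = tabN (den M env) (den f env).
Proof. unfold tabE, tabN, two. dsimp. reflexivity. Qed.
Global Arguments tabE : simpl never.
#[export] Hint Rewrite den_tabE : dendb.

Definition ptabE M i := ESum M (EMul (epow two (EV 0)) (ebit (EV 0) (sh i))).
Lemma den_ptabE M i env : den (ptabE M i) env = ptabN (den M env) (den i env).
Proof. unfold ptabE, ptabN, two. dsimp. reflexivity. Qed.
Global Arguments ptabE : simpl never.
#[export] Hint Rewrite den_ptabE : dendb.

Definition S0E k M N := ESum N (EMul (epow two (EV 0)) (esg (ESum (sh k) (eeq (EV 1) (ptabE (sh (sh M)) (EV 0)))))).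
Lemma den_S0E k M N env : den (S0E k M N) env = S0N (den k env) (den M env) (den N env).
Proof. unfold S0E, S0N, two. dsimp. reflexivity. Qed.
Global Arguments S0E : simpl never.
#[export] Hint Rewrite den_S0E : dendb.

Definition compE N a i := emod (ediv a (epow N i)) N.
Lemma den_compE N a i env : den (compE N a i) env = compN (den N env) (den a env) (den i env).
Proof. unfold compE, compN. dsimp. reflexivity. Qed.
Global Arguments compE : simpl never.
#[export] Hint Rewrite den_compE : dendb.

Definition wE N m a j := ESum m (EMul (epow two (EV 0)) (ebit (compE (sh N) (sh a) (EV 0)) (sh j))).
Lemma den_wE N m a j env : den (wE N m a j) env = wN (den N env) (den m env) (den a env) (den j env).
Proof. unfold wE, wN, two. dsimp. reflexivity. Qed.
Global Arguments wE : simpl never.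
#[export] Hint Rewrite den_wE : dendb.

Definition composeE M N psi m a := ESum M (EMul (epow two (EV 0)) (evalE (wE (sh N) (sh m) (sh a) (EV 0)) (sh psi))).
Lemma den_composeE M N psi m a env : den (composeE M N psi m a) env = composeN (den M env) (den N env) (den psi env) (den m env) (den a env).
Proof. unfold composeE, composeN, two. dsimp. reflexivity. Qed.
Global Arguments composeE : simpl never.
#[export] Hint Rewrite den_composeE : dendb.

Definition CE M N psi S T := ELet (mvE psi) (esg (ESum (epow (sh N) (EV 0))
  (EMul (eeq (ESum (EV 1) (ebit (sh (sh (sh S))) (compE (sh (sh (sh N))) (EV 1) (EV 0)))) (EV 1))
        (eeq (sh (sh T)) (composeE (sh (sh M)) (sh (sh N)) (sh (sh psi)) (EV 1) (EV 0)))))).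
Lemma den_CE M N psi S T env : den (CE M N psi S T) env = CN (den M env) (den N env) (den psi env) (den S env) (den T env).
Proof. unfold CE, CN. dsimp. reflexivity. Qed.
Global Arguments CE : simpl never.
#[export] Hint Rewrite den_CE : dendb.

Definition genE M N Q S T := esg (esumL Q (EMul (propE (EV 0)) (CE (sh M) (sh N) (EV 0) (sh S) (sh T)))).
Lemma den_genE M N Q S T env : den (genE M N Q S T) env = genN (den M env) (den N env) (den Q env) (den S env) (den T env).
Proof. unfold genE, genN. dsimp. reflexivity. Qed.
Global Arguments genE : simpl never.
#[export] Hint Rewrite den_genE : dendb.

Definition stepE xB xT fD fB M N Q S := ESum N (EMul (epow two (EV 0)) (esg (EAdd (ebit (sh S) (EV 0))
  (EAdd (genE (sh M) (sh N) (sh Q) (sh S) (EV 0))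
   (EAdd (EMul (EC fD) (CE (sh M) (sh N) (sh xB) (sh S) (EV 0)))
         (EMul (EC fB) (CE (sh M) (sh N) (sh xT) (sh S) (EV 0)))))))).
Lemma den_stepE xB xT fD fB M N Q S env : den (stepE xB xT fD fB M N Q S) env = stepN (den xB env) (den xT env) fD fB (den M env) (den N env) (den Q env) (den S env).
Proof. unfold stepE, stepN, two. dsimp. reflexivity. Qed.
Global Arguments stepE : simpl never.
#[export] Hint Rewrite den_stepE : dendb.

Definition memberE xB xT fD fB Q f := ELet (mvE f) (ELet (epow two (EV 0)) (ELet (epow two (EV 0))
  (ebit (EIter (EAdd (EV 0) (EC 1)) (S0E (EV 2) (EV 1) (EV 0))
          (stepE (sh (sh (sh (sh xB)))) (sh (sh (sh (sh xT)))) fD fB (EV 2) (EV 1) (sh (sh (sh (sh Q)))) (EV 0)))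
        (tabE (EV 1) (sh (sh (sh f))))))).
Lemma den_memberE xB xT fD fB Q f env : den (memberE xB xT fD fB Q f) env = memberN (den xB env) (den xT env) fD fB (den Q env) (den f env).
Proof. unfold memberE, memberN, two. dsimp. reflexivity. Qed.
Global Arguments memberE : simpl never.
#[export] Hint Rewrite den_memberE : dendb.

Definition mainE xB xT fD fB := ELet (efst (EV 0)) (ELet (esnd (EV 1))
  (ESub (EC 1) (esumL (EV 1) (EMul (propE (EV 0)) (ESub (EC 1) (memberE (sh (sh (sh xB))) (sh (sh (sh xT))) fD fB (EV 1) (EV 0))))))).
Lemma den_mainE xB xT fD fB env : den (mainE xB xT fD fB) env = decideN (den xB env) (den xT env) fD fB (env 0).
Proof. unfold mainE, decideN. dsimp. reflexivity. Qed.

Definition digit B W j := (W / B ^ j) mod B.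

Lemma digit_sum B n d : 0 < B -> (forall i, i < n -> d i < B) ->
  bsum n (fun i => B ^ i * d i) < B ^ n /\
  forall j, j < n -> digit B (bsum n (fun i => B ^ i * d i)) j = d j.
Proof.
  intros HB. induction n as [|n IH]; intros Hd.
  - simpl. split; [lia| intros; lia].
  - destruct IH as [Hlt Hdig]. intros; apply Hd; lia.
    assert (Hdn : d n < B) by (apply Hd; lia).
    simpl bsum. set (W := bsum n (fun i => B ^ i * d i)) in *.
    split.
    + rewrite Nat.pow_succ_r'. nia.
    + intros j Hj. unfold digit.
      assert (HBj : B ^ j <> 0) by (apply Nat.pow_nonzero; lia).
      destruct (Nat.eq_dec j n) as [->|Hne].
      * rewrite Nat.mul_comm, Nat.div_add by auto. rewrite Nat.div_small by auto.
        simpl. apply Nat.mod_small. auto.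
      * assert (j < n) by lia.
        replace (B ^ n) with (B ^ j * B ^ (n - j)) by (rewrite <- Nat.pow_add_r; f_equal; lia).
        replace (B ^ j * B ^ (n - j) * d n) with ((B ^ (n - j) * d n) * B ^ j) by lia.
        rewrite Nat.div_add by auto.
        replace (B ^ (n - j)) with (B * B ^ (n - j - 1)) by (rewrite <- Nat.pow_succ_r'; f_equal; lia).
        rewrite <- Nat.mul_assoc, Nat.mul_comm, Nat.mod_add by lia.
        apply Hdig. auto.
Qed.

Lemma nbit_digit W J : nbit W J = digit 2 W J.
Proof. rewrite nbit_spec. reflexivity. Qed.

Lemma b2n_lt2 b : b2n b < 2.
Proof. destruct b; simpl; lia. Qed.
Lemma nbit_lt2 W J : nbit W J < 2.
Proof. destruct (nbit_01 W J) as [->| ->]; lia. Qed.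

Lemma bits_sum n d j : (forall i, i < n -> d i < 2) -> j < n ->
  nbit (bsum n (fun i => 2 ^ i * d i)) j = d j.
Proof. intros Hd Hj. rewrite nbit_digit. apply digit_sum; auto. Qed.
Lemma bits_sum_lt n d : (forall i, i < n -> d i < 2) -> bsum n (fun i => 2 ^ i * d i) < 2 ^ n.
Proof. intros Hd. apply digit_sum; auto. Qed.

Lemma eval_subst v s a : eval_refl v (subst s a) = eval_refl (fun i => eval_refl v (s i)) a.
Proof. induction a; simpl; rewrite ?IHa, ?IHa1, ?IHa2; auto. Qed.

Lemma eval_mv v v' a : (forall i, i < mv a -> v i = v' i) -> eval_refl v a = eval_refl v' a.
Proof.
  induction a; simpl; intros H.
  - apply H. lia.
  - rewrite IHa; auto.
  - rewrite IHa1, IHa2; auto; intros; apply H; lia.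
  - rewrite IHa1, IHa2; auto; intros; apply H; lia.
  - rewrite IHa; auto.
  - rewrite IHa; auto.
Qed.

Lemma mv_pos a : 1 <= mv a.
Proof. induction a; simpl; lia. Qed.

Lemma mv_subst s a k : 1 <= k -> (forall i, i < mv a -> mv (s i) <= k) -> mv (subst s a) <= k.
Proof.
  induction a; simpl; intros Hk H.
  - apply H. lia.
  - apply IHa; auto.
  - apply Nat.max_lub; [apply IHa1|apply IHa2]; auto; intros; apply H; lia.
  - apply Nat.max_lub; [apply IHa1|apply IHa2]; auto; intros; apply H; lia.
  - apply IHa; auto.
  - apply IHa; auto.
Qed.

Lemma subst_subst s s' a : subst s' (subst s a) = subst (fun i => subst s' (s i)) a.
Proof. induction a; simpl; rewrite ?IHa, ?IHa1, ?IHa2; auto. Qed.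

Lemma subst_var a : subst Var a = a.
Proof. induction a; simpl; rewrite ?IHa, ?IHa1, ?IHa2; auto. Qed.

Definition vcode k (v : nat -> bool) := bsum k (fun i => 2 ^ i * b2n (v i)).
Lemma vcode_lt k v : vcode k v < 2 ^ k.
Proof. apply bits_sum_lt. intros; apply b2n_lt2. Qed.
Lemma vcode_vb k v i : i < k -> vb (vcode k v) i = v i.
Proof.
  intros H. unfold vb, vcode. rewrite bits_sum; auto. destruct (v i); auto.
  intros; apply b2n_lt2.
Qed.

Definition tab M a := bsum M (fun j => 2 ^ j * b2n (eval_refl (vb j) a)).
Lemma tab_lt M a : tab M a < 2 ^ M.
Proof. apply bits_sum_lt. intros; apply b2n_lt2. Qed.
Lemma tab_bit M a j : j < M -> nbit (tab M a) j = b2n (eval_refl (vb j) a).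
Proof. intros. apply bits_sum; auto. intros; apply b2n_lt2. Qed.
Lemma tabN_enc M a : tabN M (enc_form a) = tab M a.
Proof. unfold tabN, tab. apply bsum_ext. intros j. rewrite evalN_enc. auto. Qed.
Lemma ptabN_tab M i : ptabN M i = tab M (Var i).
Proof. unfold ptabN, tab. apply bsum_ext. intros j. simpl. unfold vb. destruct (nbit_01 j i) as [-> | ->]; auto. Qed.

Lemma tab_eq_bits M a b : tab M a = tab M b -> forall j, j < M -> eval_refl (vb j) a = eval_refl (vb j) b.
Proof.
  intros H j Hj. pose proof (tab_bit M a j Hj). pose proof (tab_bit M b j Hj).
  rewrite H in H0. rewrite H0 in H1. destruct (eval_refl (vb j) a), (eval_refl (vb j) b); simpl in *; auto; lia.
Qed.

Lemma tab_ext M a b : (forall j, j < M -> eval_refl (vb j) a = eval_refl (vb j) b) -> tab M a = tab M b.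
Proof.
  intros H. unfold tab. clear -H. induction M; simpl; auto. rewrite IHM, H; auto.
Qed.

Inductive CL (G : list form) : form -> Prop :=
| CL_var : forall n, CL G (Var n)
| CL_app : forall psi s, In psi G -> (forall x, CL G (s x)) -> CL G (subst s psi).

Definition InClone (G : list form) (phi : form) : Prop :=
  exists t, CL G t /\ forall v, eval_refl v t = eval_refl v phi.

Definition Gset (fD fB : bool) (Psi : list form) : list form :=
  filter propositional Psi ++ (if fD then [Bot] else []) ++ (if fB then [Top] else []).

Lemma bsum_ext_lt n f g : (forall i, i < n -> f i = g i) -> bsum n f = bsum n g.
Proof. induction n; simpl; intros H; auto. rewrite IHn, H; auto. Qed.

Lemma bsum_pos n f : 0 < bsum n f <-> exists i, i < n /\ 0 < f i.
Proof.
  induction n; simpl; split.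
  - lia.
  - intros [i [Hi _]]; lia.
  - intros H. destruct (f n) eqn:E.
    + destruct (proj1 IHn ltac:(lia)) as [i [Hi Hf]]. exists i. split; auto.
    + exists n. split; [lia|]. rewrite E. lia.
  - intros [i [Hi Hf]]. destruct (Nat.eq_dec i n); subst; [lia|].
    assert (0 < bsum n f) by (apply IHn; exists i; split; auto; lia). lia.
Qed.

Lemma bsum_full m f : (forall i, i < m -> f i <= 1) -> (bsum m f = m <-> forall i, i < m -> f i = 1).
Proof.
  induction m; simpl; intros H; split; auto.
  - intros; lia.
  - intros E i Hi.
    assert (bsum m f <= m).
    { clear -H. induction m; simpl; auto. assert (f m <= 1) by (apply H; lia).
      assert (bsum m f <= m) by (apply IHm; intros; apply H; lia). lia. }
    assert (f m <= 1) by (apply H; lia).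
    assert (bsum m f = m) by lia. assert (f m = 1) by lia.
    destruct (Nat.eq_dec i m); subst; auto. apply IHm; auto; lia.
  - intros Hall. rewrite (proj2 (IHm (fun i Hi => H i ltac:(lia)))). rewrite Hall; lia.
    intros; apply Hall; lia.
Qed.

Lemma bsum_le n f g : (forall i, i < n -> f i <= g i) -> bsum n f <= bsum n g.
Proof. induction n; simpl; intros H; auto. assert (f n <= g n) by (apply H; lia).
  assert (bsum n f <= bsum n g) by (apply IHn; intros; apply H; lia). lia. Qed.

Lemma bsum_lt n f g : (forall i, i < n -> f i <= g i) -> (exists i, i < n /\ f i < g i) -> bsum n f < bsum n g.
Proof.
  induction n; simpl; intros H [i [Hi Hlt]]; [lia|].
  assert (f n <= g n) by (apply H; lia).
  destruct (Nat.eq_dec i n); subst.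
  - assert (bsum n f <= bsum n g) by (apply bsum_le; intros; apply H; lia). lia.
  - assert (bsum n f < bsum n g) by (apply IHn; [intros; apply H; lia| exists i; split; auto; lia]). lia.
Qed.

Lemma bsum_bound n f : (forall i, i < n -> f i <= 1) -> bsum n f <= n.
Proof. induction n; simpl; intros H; auto. assert (f n <= 1) by (apply H; lia).
  assert (bsum n f <= n) by (apply IHn; intros; apply H; lia). lia. Qed.

Lemma finite_choice (P : nat -> form -> Prop) m :
  (forall i, i < m -> exists t, P i t) -> exists s, forall i, i < m -> P i (s i).
Proof.
  induction m; intros H.
  - exists (fun _ => Var 0). intros; lia.
  - destruct IHm as [s Hs]. intros; apply H; lia.
    destruct (H m ltac:(lia)) as [t Ht].
    exists (fun i => if i =? m then t else s i). intros i Hi.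
    destruct (Nat.eqb_spec i m); subst; auto. apply Hs. lia.
Qed.

Lemma sgn_01 x : sgn x < 2.
Proof. unfold sgn. destruct (x =? 0); lia. Qed.
Lemma sgn_1 x : sgn x = 1 <-> 0 < x.
Proof. unfold sgn. destruct (Nat.eqb_spec x 0); split; intros; lia. Qed.

Lemma compN_digit N a i : 0 < N -> compN N a i = digit N a i.
Proof.
  intros HN. unfold compN, digit. rewrite nmod_spec, ndiv_spec; auto.
  apply Nat.neq_0_lt_0, Nat.pow_nonzero. lia.
Qed.
Lemma compN_lt N a i : 0 < N -> compN N a i < N.
Proof. intros. rewrite compN_digit by auto. apply Nat.mod_upper_bound. lia. Qed.

Definition encA N m (h : nat -> nat) := bsum m (fun i => N ^ i * h i).
Lemma encA_spec N m h : 0 < N -> (forall i, i < m -> h i < N) ->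
  encA N m h < N ^ m /\ forall i, i < m -> compN N (encA N m h) i = h i.
Proof.
  intros HN Hh. destruct (digit_sum N m h HN Hh) as [H1 H2]. split; auto.
  intros. rewrite compN_digit; auto.
Qed.

Lemma composeN_tab M N psi a s : 0 < N ->
  (forall i, i < mv psi -> compN N a i = tab M (s i)) ->
  composeN M N (enc_form psi) (mv psi) a = tab M (subst s psi).
Proof.
  intros HN H. unfold composeN, tab. apply bsum_ext_lt. intros j Hj. f_equal.
  rewrite evalN_enc. f_equal. rewrite eval_subst. apply eval_mv. intros i Hi.
  unfold wN. unfold vb at 1. rewrite bits_sum; auto.
  - rewrite H, tab_bit by auto. destruct (eval_refl (vb j) (s i)); reflexivity.
  - intros; apply nbit_lt2.
Qed.

Lemma CN_01 M N p S T : CN M N p S T < 2.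
Proof. apply sgn_01. Qed.

Lemma CN_spec M N psi S T : CN M N (enc_form psi) S T = 1 <->
  exists a, a < N ^ mv psi /\ (forall i, i < mv psi -> nbit S (compN N a i) = 1) /\
            T = composeN M N (enc_form psi) (mv psi) a.
Proof.
  unfold CN. rewrite mvN_enc, sgn_1, bsum_pos. split.
  - intros [a [Ha Hp]]. exists a. split; auto.
    unfold b2n in Hp. destruct (Nat.eqb_spec (bsum (mv psi) (fun i => nbit S (compN N a i))) (mv psi)) as [E|E]; [|lia].
    destruct (Nat.eqb_spec T (composeN M N (enc_form psi) (mv psi) a)); [|lia].
    split; auto. apply bsum_full; auto. intros; pose proof (nbit_lt2 S (compN N a i)); lia.
  - intros [a [Ha [Hall HT]]]. exists a. split; auto.
    assert (Hb : bsum (mv psi) (fun i => nbit S (compN N a i)) = mv psi).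
    { apply bsum_full; [intros i _; pose proof (nbit_lt2 S (compN N a i)); lia| exact Hall]. }
    rewrite Hb.
    rewrite Nat.eqb_refl, HT, Nat.eqb_refl. simpl. lia.
Qed.

Lemma fold_sum_pos (f : form -> nat) l : 0 < fold_right (fun a r => f a + r) 0 l <-> exists a, In a l /\ 0 < f a.
Proof.
  induction l; simpl; split.
  - lia.
  - intros [a [[] _]].
  - intros H. destruct (f a) eqn:E.
    + destruct (proj1 IHl ltac:(lia)) as [b [Hb Hf]]. exists b. auto.
    + exists a. rewrite E. split; auto; lia.
  - intros [b [[<-|Hb] Hf]]; [lia|]. assert (0 < fold_right (fun a0 r => f a0 + r) 0 l) by (apply IHl; eauto). lia.
Qed.

Lemma genN_spec M N Psi S T : 0 < genN M N (enc_list Psi) S T <->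
  exists psi, In psi Psi /\ propositional psi = true /\ CN M N (enc_form psi) S T = 1.
Proof.
  unfold genN. assert (forall x, 0 < sgn x <-> 0 < x) as Hs by (intros x; unfold sgn; destruct (Nat.eqb_spec x 0); lia).
  rewrite Hs, sumLN_enc. cbv beta. rewrite fold_sum_pos. split.
  - intros [a [Ha Hp]]. exists a. rewrite propN_enc in Hp. destruct (propositional a); simpl in Hp; [|lia].
    pose proof (CN_01 M N (enc_form a) S T). split; auto. split; auto. lia.
  - intros [a [Ha [Hp HC]]]. exists a. rewrite propN_enc, Hp, HC. split; auto.
Qed.

Definition GenP G M N S T := exists psi, In psi G /\ CN M N (enc_form psi) S T = 1.

Definition stepB fD fB M N Psi S := stepN eBot eTop (b2n fD) (b2n fB) M N (enc_list Psi) S.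

Lemma GenP_Gset fD fB M N Psi S T : GenP (Gset fD fB Psi) M N S T <->
  (exists psi, In psi Psi /\ propositional psi = true /\ CN M N (enc_form psi) S T = 1)
  \/ (fD = true /\ CN M N eBot S T = 1) \/ (fB = true /\ CN M N eTop S T = 1).
Proof.
  unfold GenP, Gset. split.
  - intros [psi [Hin HC]]. apply in_app_or in Hin as [Hin|Hin].
    + left. apply filter_In in Hin as [Hin Hp]. eauto.
    + apply in_app_or in Hin as [Hin|Hin].
      * destruct fD; [|contradiction]. destruct Hin as [<-|[]]. right; left. split; auto.
      * destruct fB; [|contradiction]. destruct Hin as [<-|[]]. right; right. split; auto.
  - intros [[psi [Hin [Hp HC]]]|[[-> HC]|[-> HC]]].
    + exists psi. split; auto. apply in_or_app. left. apply filter_In. auto.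
    + exists Bot. split; auto. apply in_or_app. right. apply in_or_app. left. left. auto.
    + exists Top. split; auto. apply in_or_app. right. apply in_or_app. right. left. auto.
Qed.

Lemma step_bit fD fB M N Psi S T : T < N ->
  (nbit (stepB fD fB M N Psi S) T = 1 <-> nbit S T = 1 \/ GenP (Gset fD fB Psi) M N S T).
Proof.
  intros HT. rewrite GenP_Gset. unfold stepB, stepN. rewrite bits_sum by (auto; intros; apply sgn_01).
  rewrite sgn_1. rewrite <- genN_spec.
  pose proof (CN_01 M N eBot S T). pose proof (CN_01 M N eTop S T).
  set (cB := CN M N eBot S T) in *. set (cT := CN M N eTop S T) in *.
  set (g := genN M N (enc_list Psi) S T) in *.
  pose proof (nbit_01 S T).
  destruct fD, fB; unfold b2n; split; intros; lia.
Qed.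

Lemma CN_cong M N p S S' T : 0 < N -> (forall T, T < N -> nbit S T = nbit S' T) ->
  CN M N p S T = CN M N p S' T.
Proof.
  intros HN H. unfold CN. f_equal. apply bsum_ext. intros a.
  rewrite (bsum_ext _ (fun i => nbit S (compN N a i)) (fun i => nbit S' (compN N a i))); auto.
  intros i. apply H. apply compN_lt. auto.
Qed.

Lemma genN_cong M N Q S S' T : 0 < N -> (forall T, T < N -> nbit S T = nbit S' T) ->
  genN M N Q S T = genN M N Q S' T.
Proof.
  intros HN H. unfold genN. f_equal. apply sumLN_ext. intros x. rewrite (CN_cong M N x S S'); auto.
Qed.

Lemma step_cong fD fB M N Psi S S' : 0 < N -> (forall T, T < N -> nbit S T = nbit S' T) ->
  stepB fD fB M N Psi S = stepB fD fB M N Psi S'.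
Proof.
  intros HN H. unfold stepB, stepN. apply bsum_ext_lt. intros T HT.
  rewrite (H T HT), (genN_cong M N _ S S' T HN H), (CN_cong M N eBot S S' T HN H), (CN_cong M N eTop S S' T HN H).
  reflexivity.
Qed.

Definition Sseq fD fB k Psi i :=
  Nat.iter i (stepB fD fB (2 ^ k) (2 ^ 2 ^ k) Psi) (S0N k (2 ^ k) (2 ^ 2 ^ k)).

Lemma Sseq_S fD fB k Psi i : Sseq fD fB k Psi (S i) = stepB fD fB (2 ^ k) (2 ^ 2 ^ k) Psi (Sseq fD fB k Psi i).
Proof. reflexivity. Qed.

Lemma N_pos k : 0 < 2 ^ 2 ^ k.
Proof. apply Nat.neq_0_lt_0, Nat.pow_nonzero. lia. Qed.

Lemma mono fD fB k Psi S T : T < 2 ^ 2 ^ k -> nbit S T = 1 -> nbit (stepB fD fB (2 ^ k) (2 ^ 2 ^ k) Psi S) T = 1.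
Proof. intros HT H. apply step_bit; auto. Qed.

Lemma stabilize fD fB k Psi : exists i, i <= 2 ^ 2 ^ k /\
  forall T, T < 2 ^ 2 ^ k -> nbit (Sseq fD fB k Psi i) T = nbit (Sseq fD fB k Psi (S i)) T.
Proof.
  set (N := 2 ^ 2 ^ k).
  destruct (classic (exists i, i <= N /\ forall T, T < N -> nbit (Sseq fD fB k Psi i) T = nbit (Sseq fD fB k Psi (S i)) T)) as [H|H]; auto.
  exfalso.
  set (cnt := fun S => bsum N (fun T => nbit S T)).
  assert (Hinc : forall i, i <= N -> cnt (Sseq fD fB k Psi i) < cnt (Sseq fD fB k Psi (S i))).
  { intros i Hi. unfold cnt. apply bsum_lt.
    - intros T HT. destruct (nbit_01 (Sseq fD fB k Psi i) T) as [E|E]; rewrite E; [lia|].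
      rewrite Sseq_S, mono; auto.
    - apply NNPP. intros Hn. apply H. exists i. split; auto. intros T HT.
      apply NNPP. intros Hne. apply Hn. exists T. split; auto.
      destruct (nbit_01 (Sseq fD fB k Psi i) T) as [E|E]; rewrite E in *.
      + destruct (nbit_01 (Sseq fD fB k Psi (S i)) T) as [E'|E']; rewrite E' in *; lia.
      + rewrite Sseq_S, mono in Hne; [lia|exact HT|exact E]. }
  assert (Hge : forall i, i <= S N -> i <= cnt (Sseq fD fB k Psi i)).
  { induction i; intros Hi; [lia|]. specialize (Hinc i ltac:(lia)). specialize (IHi ltac:(lia)). lia. }
  specialize (Hge (S N) ltac:(lia)).
  assert (cnt (Sseq fD fB k Psi (S N)) <= N).
  { unfold cnt. apply bsum_bound. intros. pose proof (nbit_lt2 (Sseq fD fB k Psi (S N)) i). lia. }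
  lia.
Qed.

Lemma fixpoint fD fB k Psi :
  let Sf := Sseq fD fB k Psi (2 ^ 2 ^ k + 1) in
  stepB fD fB (2 ^ k) (2 ^ 2 ^ k) Psi Sf = Sf.
Proof.
  intros Sf. destruct (stabilize fD fB k Psi) as [i [Hi Hst]].
  assert (E1 : Sseq fD fB k Psi (S (S i)) = Sseq fD fB k Psi (S i)).
  { rewrite (Sseq_S fD fB k Psi (S i)).
    transitivity (stepB fD fB (2 ^ k) (2 ^ 2 ^ k) Psi (Sseq fD fB k Psi i)).
    - apply step_cong. apply N_pos. intros T HT. symmetry. apply Hst. exact HT.
    - symmetry. apply Sseq_S. }
  assert (E2 : forall d, Sseq fD fB k Psi (S i + d) = Sseq fD fB k Psi (S i)).
  { induction d. rewrite Nat.add_0_r. reflexivity. rewrite Nat.add_succ_r. rewrite Sseq_S. rewrite IHd. rewrite <- Sseq_S. exact E1. }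
  unfold Sf. rewrite <- Sseq_S.
  replace (S (2 ^ 2 ^ k + 1)) with (S i + (2 ^ 2 ^ k + 1 - i)) by lia.
  replace (2 ^ 2 ^ k + 1) with (S i + (2 ^ 2 ^ k - i)) at 2 by lia.
  rewrite !E2. reflexivity.
Qed.

Lemma S0_bit k T : T < 2 ^ 2 ^ k ->
  (nbit (S0N k (2 ^ k) (2 ^ 2 ^ k)) T = 1 <-> exists i, i < k /\ T = tab (2 ^ k) (Var i)).
Proof.
  intros HT. unfold S0N. rewrite bits_sum by (auto; intros; apply sgn_01).
  rewrite sgn_1, bsum_pos. split.
  - intros [i [Hi Hp]]. exists i. split; auto. rewrite <- ptabN_tab. unfold b2n in Hp.
    destruct (Nat.eqb_spec T (ptabN (2 ^ k) i)); auto; lia.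
  - intros [i [Hi ->]]. exists i. split; auto. rewrite ptabN_tab, Nat.eqb_refl. simpl. lia.
Qed.

Lemma S0_sub fD fB k Psi i T : T < 2 ^ 2 ^ k -> nbit (S0N k (2 ^ k) (2 ^ 2 ^ k)) T = 1 ->
  nbit (Sseq fD fB k Psi i) T = 1.
Proof. intros HT H. induction i; auto. rewrite Sseq_S. apply mono; auto. Qed.

Lemma soundness fD fB k Psi i : 1 <= k -> forall T, T < 2 ^ 2 ^ k -> nbit (Sseq fD fB k Psi i) T = 1 ->
  exists t, CL (Gset fD fB Psi) t /\ mv t <= k /\ tab (2 ^ k) t = T.
Proof.
  intros Hk. induction i; intros T HT H.
  - apply S0_bit in H as [n [Hn ->]]; auto. exists (Var n). split; [constructor|]. simpl. split; [lia|reflexivity].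
  - rewrite Sseq_S in H. apply step_bit in H as [H|[psi [Hin HC]]]; auto.
    apply CN_spec in HC as [a [Ha [Hall ->]]].
    destruct (finite_choice (fun i t => CL (Gset fD fB Psi) t /\ mv t <= k /\ tab (2 ^ k) t = compN (2 ^ 2 ^ k) a i) (mv psi)) as [s Hs].
    { intros j Hj. apply IHi; auto. apply compN_lt, N_pos. }
    set (s' := fun j => if j <? mv psi then s j else Var 0).
    exists (subst s' psi). split; [|split].
    + constructor; auto. intros x. unfold s'. destruct (x <? mv psi) eqn:E. apply Nat.ltb_lt in E. apply Hs; auto. constructor.
    + apply mv_subst; auto. intros j Hj. unfold s'. rewrite (proj2 (Nat.ltb_lt _ _) Hj). apply Hs; auto.
    + symmetry. apply composeN_tab. apply N_pos. intros j Hj. unfold s'. rewrite (proj2 (Nat.ltb_lt _ _) Hj).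
      symmetry. apply Hs; auto.
Qed.

Definition sig_k (k : nat) : nat -> form := fun n => if n <? k then Var n else Var 0.

Lemma completeness fD fB k Psi t : 1 <= k -> CL (Gset fD fB Psi) t ->
  nbit (Sseq fD fB k Psi (2 ^ 2 ^ k + 1)) (tab (2 ^ k) (subst (sig_k k) t)) = 1.
Proof.
  intros Hk HCL. set (Sf := Sseq fD fB k Psi (2 ^ 2 ^ k + 1)).
  assert (Hfix : stepB fD fB (2 ^ k) (2 ^ 2 ^ k) Psi Sf = Sf) by apply fixpoint.
  induction HCL as [n|psi s Hin Hs IH].
  - apply S0_sub. apply tab_lt. apply S0_bit. apply tab_lt.
    simpl. unfold sig_k. destruct (Nat.ltb_spec n k).
    + exists n. auto.
    + exists 0. split; auto; lia.
  - rewrite subst_subst. rewrite <- Hfix. apply step_bit. apply tab_lt. right.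
    exists psi. split; auto. apply CN_spec.
    set (h := fun i => tab (2 ^ k) (subst (sig_k k) (s i))).
    destruct (encA_spec (2 ^ 2 ^ k) (mv psi) h (N_pos k)) as [Ha Hc].
    { intros. apply tab_lt. }
    exists (encA (2 ^ 2 ^ k) (mv psi) h). split; auto. split.
    + intros i Hi. rewrite Hc; auto. apply IH.
    + symmetry. apply composeN_tab. apply N_pos. intros i Hi. rewrite Hc; auto.
Qed.

Lemma member_correct fD fB Psi phi :
  memberN eBot eTop (b2n fD) (b2n fB) (enc_list Psi) (enc_form phi) = 1 <-> InClone (Gset fD fB Psi) phi.
Proof.
  unfold memberN. rewrite mvN_enc, tabN_enc.
  change (Nat.iter (2 ^ 2 ^ mv phi + 1) (stepN eBot eTop (b2n fD) (b2n fB) (2 ^ mv phi) (2 ^ 2 ^ mv phi) (enc_list Psi))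
            (S0N (mv phi) (2 ^ mv phi) (2 ^ 2 ^ mv phi))) with (Sseq fD fB (mv phi) Psi (2 ^ 2 ^ mv phi + 1)).
  pose proof (mv_pos phi) as Hk. set (k := mv phi) in *.
  split.
  - intros H. destruct (soundness fD fB k Psi _ Hk (tab (2 ^ k) phi) (tab_lt _ _) H) as [t [HCL [Hmv Htab]]].
    exists t. split; auto. intros v.
    pose proof (tab_eq_bits _ _ _ Htab (vcode k v) (vcode_lt k v)) as E.
    rewrite (eval_mv v (vb (vcode k v)) t), (eval_mv v (vb (vcode k v)) phi); auto.
    + intros i Hi. rewrite vcode_vb; auto.
    + intros i Hi. rewrite vcode_vb; auto. lia.
  - intros [t [HCL Heq]]. pose proof (completeness fD fB k Psi t Hk HCL) as H.
    rewrite (tab_ext (2 ^ k) (subst (sig_k k) t) phi) in H; auto.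
    intros j Hj. rewrite eval_subst, Heq. apply eval_mv. intros i Hi.
    unfold sig_k. destruct (Nat.ltb_spec i k) as [_|Hc]; [reflexivity| exfalso; unfold k in Hc; lia].
Qed.

Lemma member_01 fD fB Q F : memberN eBot eTop fD fB Q F < 2.
Proof. apply nbit_lt2. Qed.


Lemma taut_L L a : normal_logic L -> tautology a -> L a.
Proof. intros H. apply (nl_taut L H). Qed.
Lemma mp_L L a b : normal_logic L -> L a -> L (Imp a b) -> L b.
Proof. intros H. apply (nl_mp L H). Qed.

Ltac taut := let v := fresh in let d := fresh in let b := fresh in
  intros v d b; simpl;
  repeat match goal with
         | |- context [peval v d b ?x] => destruct (peval v d b x)
         | |- context [d ?x] => destruct (d x)
         | |- context [b ?x] => destruct (b x)
         | |- context [v ?x] => destruct (v x)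
         end; reflexivity.

Lemma iff_refl L a : normal_logic L -> L (Iff a a).
Proof. intros H. apply taut_L; auto. unfold tautology. taut. Qed.
Lemma iff_sym L a b : normal_logic L -> L (Iff a b) -> L (Iff b a).
Proof. intros H Hab. eapply mp_L; eauto. apply taut_L; auto. unfold tautology. taut. Qed.
Lemma iff_trans L a b c : normal_logic L -> L (Iff a b) -> L (Iff b c) -> L (Iff a c).
Proof.
  intros H H1 H2. eapply mp_L; [eauto|exact H2|]. eapply mp_L; [eauto|exact H1|].
  apply taut_L; auto. unfold tautology. taut.
Qed.
Lemma iff_neg L a b : normal_logic L -> L (Iff a b) -> L (Iff (Neg a) (Neg b)).
Proof. intros H Hab. eapply mp_L; eauto. apply taut_L; auto. unfold tautology. taut. Qed.
Lemma iff_and L a b c d : normal_logic L -> L (Iff a b) -> L (Iff c d) -> L (Iff (And a c) (And b d)).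
Proof.
  intros H H1 H2. eapply mp_L; [eauto|exact H2|]. eapply mp_L; [eauto|exact H1|].
  apply taut_L; auto. unfold tautology. taut.
Qed.
Lemma iff_or L a b c d : normal_logic L -> L (Iff a b) -> L (Iff c d) -> L (Iff (Or a c) (Or b d)).
Proof.
  intros H H1 H2. eapply mp_L; [eauto|exact H2|]. eapply mp_L; [eauto|exact H1|].
  apply taut_L; auto. unfold tautology. taut.
Qed.

Lemma box_mono L a b : normal_logic L -> L (Imp a b) -> L (Imp (Box a) (Box b)).
Proof.
  intros H Hab.
  pose proof (nl_us L H (fun i => match i with 0 => a | _ => b end) _ (nl_K L H)) as HK. simpl in HK.
  apply (mp_L L (Box (Imp a b))); auto. apply (nl_nec L H). exact Hab.
Qed.

Lemma iff_box L a b : normal_logic L -> L (Iff a b) -> L (Iff (Box a) (Box b)).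
Proof.
  intros H Hab.
  assert (H1 : L (Imp a b)) by (apply (mp_L L (Iff a b)); auto; apply taut_L; auto; unfold tautology; taut).
  assert (H2 : L (Imp b a)) by (apply (mp_L L (Iff a b)); auto; apply taut_L; auto; unfold tautology; taut).
  apply box_mono in H1; auto. apply box_mono in H2; auto.
  eapply mp_L; [eauto|exact H2|]. eapply mp_L; [eauto|exact H1|].
  apply taut_L; auto. unfold tautology. taut.
Qed.

Lemma dual_L L a : normal_logic L -> L (Iff (Dia a) (Neg (Box (Neg a)))).
Proof. intros H. exact (nl_us L H (fun _ => a) _ (nl_dual L H)). Qed.

Lemma iff_dia L a b : normal_logic L -> L (Iff a b) -> L (Iff (Dia a) (Dia b)).
Proof.
  intros H Hab. eapply iff_trans; [auto|apply dual_L; auto|].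
  eapply iff_trans; [auto| |apply iff_sym, dual_L; auto].
  apply iff_neg, iff_box, iff_neg; auto.
Qed.

Lemma subst_cong L s s' a : normal_logic L -> (forall x, L (Iff (s x) (s' x))) -> L (Iff (subst s a) (subst s' a)).
Proof.
  intros H Hs. induction a; simpl; auto.
  - apply iff_neg; auto.
  - apply iff_and; auto.
  - apply iff_or; auto.
  - apply iff_dia; auto.
  - apply iff_box; auto.
Qed.

Lemma us_iff L s a b : normal_logic L -> L (Iff a b) -> L (Iff (subst s a) (subst s b)).
Proof. intros H Hab. exact (nl_us L H s _ Hab). Qed.

Fixpoint dian (n : nat) (a : form) : form :=
  match n with 0 => a | S k => Dia (dian k a) end.

Lemma dian_boxn L n a : normal_logic L -> L (Iff (dian n a) (Neg (boxn n (Neg a)))).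
Proof.
  intros H. induction n; simpl.
  - apply taut_L; auto. unfold tautology. taut.
  - eapply iff_trans; [auto|apply iff_dia; eauto|].
    eapply iff_trans; [auto|apply dual_L; auto|].
    apply iff_neg, iff_box; auto. apply taut_L; auto. unfold tautology. taut.
Qed.

Lemma boxn_mono L n a b : normal_logic L -> L (Imp a b) -> L (Imp (boxn n a) (boxn n b)).
Proof. intros H Hab. induction n; simpl; auto. apply box_mono; auto. Qed.

Lemma boxn_all L n a : normal_logic L -> L (boxn n Bot) -> L (boxn n a).
Proof.
  intros H Hb. eapply mp_L; eauto. apply boxn_mono; auto. apply taut_L; auto. unfold tautology. taut.
Qed.

Lemma dian_bot L n a : normal_logic L -> L (boxn n Bot) -> L (Neg (dian n a)).
Proof.
  intros H Hb. pose proof (dian_boxn L n a H). pose proof (boxn_all L n (Neg a) H Hb).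
  eapply mp_L; [eauto|exact H1|]. eapply mp_L; [eauto|exact H0|].
  apply taut_L; auto. unfold tautology. taut.
Qed.

Lemma prop_peval a v d b : propositional a = true -> peval v d b a = eval_refl v a.
Proof.
  induction a; simpl; intros Hp; try discriminate; auto.
  - rewrite IHa; auto.
  - apply andb_prop in Hp as [H1 H2]. rewrite IHa1, IHa2; auto.
  - apply andb_prop in Hp as [H1 H2]. rewrite IHa1, IHa2; auto.
Qed.
Lemma prop_irr a v : propositional a = true -> eval_irr v a = eval_refl v a.
Proof.
  induction a; simpl; intros Hp; try discriminate; auto.
  - rewrite IHa; auto.
  - apply andb_prop in Hp as [H1 H2]. rewrite IHa1, IHa2; auto.
  - apply andb_prop in Hp as [H1 H2]. rewrite IHa1, IHa2; auto.
Qed.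
Lemma eval_irr_subst v s a : eval_irr v (subst s a) = eval_irr (fun i => eval_irr v (s i)) a.
Proof. induction a; simpl; rewrite ?IHa, ?IHa1, ?IHa2; auto. Qed.

Lemma iff_refl_sem v a b : eval_refl v (Iff a b) = true -> eval_refl v a = eval_refl v b.
Proof. simpl. destruct (eval_refl v a), (eval_refl v b); simpl; auto. Qed.
Lemma iff_irr_sem v a b : eval_irr v (Iff a b) = true -> eval_irr v a = eval_irr v b.
Proof. simpl. destruct (eval_irr v a), (eval_irr v b); simpl; auto. Qed.

Lemma CL_prop G t : (forall g, In g G -> propositional g = true) -> CL G t -> propositional t = true.
Proof.
  intros HG HCL. induction HCL; auto.
  specialize (HG psi H). clear -HG H1. induction psi; simpl in *; auto; try discriminate.
  - apply andb_prop in HG as [A B]. rewrite IHpsi1, IHpsi2; auto.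
  - apply andb_prop in HG as [A B]. rewrite IHpsi1, IHpsi2; auto.
Qed.

Lemma Gset_prop fD fB Psi g : In g (Gset fD fB Psi) -> propositional g = true.
Proof.
  unfold Gset. intros H. apply in_app_or in H as [H|H].
  - apply filter_In in H. tauto.
  - apply in_app_or in H as [H|H].
    + destruct fD; simpl in H; [destruct H as [<-|[]]; reflexivity|contradiction].
    + destruct fB; simpl in H; [destruct H as [<-|[]]; reflexivity|contradiction].
Qed.

Lemma ML_in Phi phi : In phi Phi -> ML Phi phi.
Proof. intros H. rewrite <- (subst_var phi). apply ML_app; auto. intros; constructor. Qed.

Lemma ML_subst Psi b s : ML Psi b -> (forall x, ML Psi (s x)) -> ML Psi (subst s b).
Proof.
  intros Hb Hs. induction Hb.
  - simpl. auto.
  - rewrite subst_subst. apply ML_app; auto.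
Qed.

Lemma choice_nat (P : nat -> form -> Prop) : (forall x, exists b, P x b) -> exists f, forall x, P x (f x).
Proof.
  intros H. exists (fun x => proj1_sig (constructive_indefinite_description _ (H x))).
  intros x. exact (proj2_sig (constructive_indefinite_description _ (H x))).
Qed.

Definition criterion (G Phi : list form) : Prop :=
  forall phi, In phi Phi -> propositional phi = true -> InClone G phi.

Lemma transfer L fD fB Psi : normal_logic L ->
  (fD = true -> exists b, ML Psi b /\ forall s, L (Iff (subst s Bot) b)) ->
  (fB = true -> exists b, ML Psi b /\ forall s, L (Iff (subst s Top) b)) ->
  forall t, CL (Gset fD fB Psi) t -> exists b, ML Psi b /\ L (Iff t b).
Proof.
  intros HL HBot HTop t HCL. induction HCL as [n|psi s Hin Hs IH].
  - exists (Var n). split; [constructor|apply iff_refl; auto].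
  - destruct (choice_nat (fun x b => ML Psi b /\ L (Iff (s x) b)) IH) as [f Hf].
    unfold Gset in Hin. apply in_app_or in Hin as [Hin|Hin].
    + apply filter_In in Hin as [Hin _]. exists (subst f psi). split.
      * apply ML_app; auto. intros; apply Hf.
      * apply subst_cong; auto. intros; apply Hf.
    + apply in_app_or in Hin as [Hin|Hin].
      * destruct fD; [|contradiction]. destruct Hin as [<-|[]].
        destruct (HBot eq_refl) as [b [Hb Hb2]]. exists b. auto.
      * destruct fB; [|contradiction]. destruct Hin as [<-|[]].
        destruct (HTop eq_refl) as [b [Hb Hb2]]. exists b. auto.
Qed.

Lemma sufficiency L mD mB fD fB Phi Psi : normal_logic L ->
  M_simple mD mB Phi -> M_simple mD mB Psi ->
  (fD = true -> exists b, ML Psi b /\ forall s, L (Iff (subst s Bot) b)) ->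
  (fB = true -> exists b, ML Psi b /\ forall s, L (Iff (subst s Top) b)) ->
  criterion (Gset fD fB Psi) Phi -> preceq L Phi Psi.
Proof.
  intros HL HPhi HPsi HBot HTop Hcr a Ha. induction Ha as [n|phi s Hin Hs IH].
  - exists (Var n). split; [constructor|apply iff_refl; auto].
  - destruct (choice_nat (fun x b => ML Psi b /\ L (Iff (s x) b)) IH) as [f Hf].
    destruct HPhi as [HPhi1 _].
    destruct (HPhi1 phi Hin) as [Hp|[[HmD [x ->]]|[HmB [x ->]]]].
    + destruct (Hcr phi Hin Hp) as [t [HCL Heq]].
      destruct (transfer L fD fB Psi HL HBot HTop t HCL) as [b0 [Hb0 Hi0]].
      assert (Hpt : propositional t = true) by (apply (CL_prop (Gset fD fB Psi)); auto; apply Gset_prop).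
      assert (Hphit : L (Iff phi t)).
      { apply taut_L; auto. intros v d b. simpl. rewrite !prop_peval by auto. rewrite Heq.
        destruct (eval_refl v phi); reflexivity. }
      exists (subst f b0). split.
      * apply ML_subst; auto. intros; apply Hf.
      * apply (iff_trans L _ (subst s b0)); auto.
        -- apply us_iff; auto. eapply iff_trans; eauto.
        -- apply subst_cong; auto. intros; apply Hf.
    + destruct HPsi as [_ [HD _]]. destruct (HD HmD) as [y Hy].
      exists (subst (fun _ => f x) (Dia (Var y))). split.
      * apply ML_app; auto. intros; apply Hf.
      * simpl. apply iff_dia; auto. apply Hf.
    + destruct HPsi as [_ [_ HB]]. destruct (HB HmB) as [y Hy].
      exists (subst (fun _ => f x) (Box (Var y))). split.
      * apply ML_app; auto. intros; apply Hf.
      * simpl. apply iff_box; auto. apply Hf.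
Qed.

Lemma necessity L G Phi Psi (evalX : (nat -> bool) -> form -> bool) :
  (forall b, ML Psi b -> exists t, CL G t /\ forall v, evalX v b = eval_refl v t) ->
  (forall a, L a -> forall v, evalX v a = true) ->
  (forall a v, propositional a = true -> evalX v a = eval_refl v a) ->
  (forall v a b, evalX v (Iff a b) = true -> evalX v a = evalX v b) ->
  preceq L Phi Psi -> criterion G Phi.
Proof.
  intros HC Hval Hprop Hiff Hpre phi Hin Hp.
  destruct (Hpre phi (ML_in _ _ Hin)) as [b [Hb HLb]].
  destruct (HC b Hb) as [t [HCL Ht]]. exists t. split; auto. intros v.
  rewrite <- Ht, <- Hprop by auto. symmetry. apply Hiff. apply Hval. auto.
Qed.

Lemma eval_refl_ext v v' a : (forall i, v i = v' i) -> eval_refl v a = eval_refl v' a.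
Proof. intros H. apply eval_mv. auto. Qed.
Lemma eval_refl_bot v : eval_refl v Bot = false.
Proof. simpl. destruct (v 0); reflexivity. Qed.
Lemma eval_refl_top v : eval_refl v Top = true.
Proof. simpl. destruct (v 0); reflexivity. Qed.

Lemma Bot_in_G fB Psi : CL (Gset true fB Psi) Bot.
Proof.
  rewrite <- (subst_var Bot). apply CL_app; [|intros; constructor].
  unfold Gset. apply in_or_app. right. apply in_or_app. left. left. reflexivity.
Qed.
Lemma Top_in_G fD Psi : CL (Gset fD true Psi) Top.
Proof.
  rewrite <- (subst_var Top). apply CL_app; [|intros; constructor].
  unfold Gset. apply in_or_app. right. apply in_or_app. right. left. reflexivity.
Qed.

Lemma collapseA mD mB Psi : M_simple mD mB Psi ->
  forall b, ML Psi b -> exists t, CL (Gset false false Psi) t /\ forall v, eval_refl v b = eval_refl v t.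
Proof.
  intros [HPsi _] b Hb. induction Hb as [n|psi s Hin Hs IH].
  - exists (Var n). split; [constructor|auto].
  - destruct (choice_nat (fun x t => CL (Gset false false Psi) t /\ forall v, eval_refl v (s x) = eval_refl v t) IH) as [f Hf].
    destruct (HPsi psi Hin) as [Hp|[[_ [y ->]]|[_ [y ->]]]].
    + exists (subst f psi). split.
      * apply CL_app. unfold Gset. apply in_or_app. left. apply filter_In. auto. intros; apply Hf.
      * intros v. rewrite !eval_subst. apply eval_refl_ext. intros; apply Hf.
    + exists (f y). split; [apply Hf|]. intros v. simpl. apply Hf.
    + exists (f y). split; [apply Hf|]. intros v. simpl. apply Hf.
Qed.

Lemma collapseB mD mB Psi : M_simple mD mB Psi ->
  forall b, ML Psi b -> exists t, CL (Gset mD mB Psi) t /\ forall v, eval_irr v b = eval_refl v t.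
Proof.
  intros [HPsi _] b Hb. induction Hb as [n|psi s Hin Hs IH].
  - exists (Var n). split; [constructor|auto].
  - destruct (choice_nat (fun x t => CL (Gset mD mB Psi) t /\ forall v, eval_irr v (s x) = eval_refl v t) IH) as [f Hf].
    destruct (HPsi psi Hin) as [Hp|[[HmD [y ->]]|[HmB [y ->]]]].
    + exists (subst f psi). split.
      * apply CL_app. unfold Gset. apply in_or_app. left. apply filter_In. auto. intros; apply Hf.
      * intros v. rewrite eval_irr_subst, eval_subst, prop_irr by auto. apply eval_refl_ext. intros; apply Hf.
    + subst mD. exists Bot. split; [apply Bot_in_G|]. intros v. rewrite eval_refl_bot. reflexivity.
    + subst mB. exists Top. split; [apply Top_in_G|]. intros v. rewrite eval_refl_top. reflexivity.
Qed.

Lemma dian_ML Psi y n : In (Dia (Var y)) Psi -> ML Psi (dian n (Var 0)).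
Proof.
  intros H. induction n; simpl. constructor.
  change (Dia (dian n (Var 0))) with (subst (fun _ => dian n (Var 0)) (Dia (Var y))).
  apply ML_app; auto.
Qed.
Lemma boxn_ML Psi y n : In (Box (Var y)) Psi -> ML Psi (boxn n (Var 0)).
Proof.
  intros H. induction n; simpl. constructor.
  change (Box (boxn n (Var 0))) with (subst (fun _ => boxn n (Var 0)) (Box (Var y))).
  apply ML_app; auto.
Qed.

Theorem equivA L mD mB Phi Psi : normal_logic L -> typeA L ->
  M_simple mD mB Phi -> M_simple mD mB Psi ->
  (preceq L Phi Psi <-> criterion (Gset false false Psi) Phi).
Proof.
  intros HL HA HPhi HPsi. split.
  - apply (necessity L _ Phi Psi eval_refl).
    + apply (collapseA mD mB). auto.
    + exact HA.
    + auto.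
    + intros v a b. apply iff_refl_sem.
  - apply (sufficiency L mD mB false false); auto; intros H; discriminate.
Qed.

Theorem equivB L mD mB Phi Psi : normal_logic L -> typeB L ->
  M_simple mD mB Phi -> M_simple mD mB Psi ->
  (preceq L Phi Psi <-> criterion (Gset mD mB Psi) Phi).
Proof.
  intros HL [Hirr [n [Hn Hbox]]] HPhi HPsi. split.
  - apply (necessity L _ Phi Psi eval_irr).
    + apply (collapseB mD mB). auto.
    + exact Hirr.
    + intros; apply prop_irr; auto.
    + intros v a b. apply iff_irr_sem.
  - apply (sufficiency L mD mB mD mB); auto.
    + intros HmD. destruct HPsi as [_ [HD _]]. destruct (HD HmD) as [y Hy].
      exists (dian n (Var 0)). split. eapply dian_ML; eauto.
      intros s. pose proof (dian_bot L n (Var 0) HL Hbox) as Hneg.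
      eapply mp_L; [eauto|exact Hneg|]. apply taut_L; auto. unfold tautology. taut.
    + intros HmB. destruct HPsi as [_ [_ HB]]. destruct (HB HmB) as [y Hy].
      exists (boxn n (Var 0)). split. eapply boxn_ML; eauto.
      intros s. pose proof (boxn_all L n (Var 0) HL Hbox) as Hall.
      eapply mp_L; [eauto|exact Hall|]. apply taut_L; auto. unfold tautology. taut.
Qed.

Lemma decide_correct fD fB Phi Psi :
  (criterion (Gset fD fB Psi) Phi /\ decideN eBot eTop (b2n fD) (b2n fB) (npair (enc_list Phi) (enc_list Psi)) = 1)
  \/ (~ criterion (Gset fD fB Psi) Phi /\ decideN eBot eTop (b2n fD) (b2n fB) (npair (enc_list Phi) (enc_list Psi)) = 0).
Proof.
  unfold decideN. rewrite nfst_npair, nsnd_npair, sumLN_enc. cbv beta.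
  set (m := fun a => memberN eBot eTop (b2n fD) (b2n fB) (enc_list Psi) (enc_form a)).
  change (fold_right (fun a r => propN (enc_form a) * (1 - memberN eBot eTop (b2n fD) (b2n fB) (enc_list Psi) (enc_form a)) + r) 0 Phi)
    with (fold_right (fun a r => (fun a => propN (enc_form a) * (1 - m a)) a + r) 0 Phi).
  set (Sm := fold_right _ 0 Phi).
  destruct (classic (criterion (Gset fD fB Psi) Phi)) as [Hc|Hc].
  - left. split; auto. assert (Sm = 0); [|lia].
    destruct (Nat.eq_dec Sm 0) as [E|E]; auto. exfalso.
    assert (0 < Sm) as Hp by lia. unfold Sm in Hp. apply fold_sum_pos in Hp as [a [Ha Hp]].
    rewrite propN_enc in Hp. destruct (propositional a) eqn:Ep; cbn [b2n] in Hp; [|lia].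
    pose proof (proj2 (member_correct fD fB Psi a) (Hc a Ha Ep)). unfold m in Hp. lia.
  - right. split; auto. assert (0 < Sm); [|lia].
    unfold Sm. apply fold_sum_pos.
    apply NNPP. intros Hn. apply Hc. intros phi Hin Hp.
    apply (member_correct fD fB Psi phi).
    pose proof (member_01 (b2n fD) (b2n fB) (enc_list Psi) (enc_form phi)).
    destruct (Nat.eq_dec (memberN eBot eTop (b2n fD) (b2n fB) (enc_list Psi) (enc_form phi)) 1) as [E|E]; auto.
    exfalso. apply Hn. exists phi. split; auto. rewrite propN_enc, Hp. unfold m. cbn [b2n]. lia.
Qed.

Theorem corollary4p17 (L : logic) (mD mB : bool) :
  normal_logic L -> typeA L \/ typeB L ->
  decidable_on (M_simple mD mB) (preceq L).
Proof.
  intros HL HT.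
  assert (Hgen : forall fD fB, (forall Phi Psi, M_simple mD mB Phi -> M_simple mD mB Psi ->
       (preceq L Phi Psi <-> criterion (Gset fD fB Psi) Phi)) ->
       decidable_on (M_simple mD mB) (preceq L)).
  { intros fD fB Heq.
    destruct (compile (mainE (EC eBot) (EC eTop) (b2n fD) (b2n fB)) 1) as [c Hc].
    exists c. intros Phi Psi HPhi HPsi.
    set (x := npair (enc_list Phi) (enc_list Psi)).
    specialize (Hc [x] eq_refl). rewrite den_mainE in Hc. cbn [den] in Hc.
    change (envOf [x] 0) with x in Hc.
    destruct (decide_correct fD fB Phi Psi) as [[Hcr Hd]|[Hcr Hd]]; fold x in Hd; rewrite Hd in Hc.
    - left. split; auto. apply Heq; auto.
    - right. split; auto. rewrite Heq; auto. }
  destruct HT as [HA|HB].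
  - apply (Hgen false false). intros. apply (equivA L mD mB); auto.
  - apply (Hgen mD mB). intros. apply (equivB L mD mB); auto.
Qed.
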